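(* Let $N$ be a non-negative integer, $\beta=N+1$, $\lambda_1=(h_1+h_2-l_1-l_2-\alpha_1-\alpha_2-\beta+2)/2$, and assume $-\lambda_1-\alpha_1\notin\{0,1,\dots,N-1\}$ and $\lambda_1+\alpha_2>1$ (real). Let $c_k(E)$, $c(E)$ be as in the context and $c(E_0)=0$. Assume the parameters and $x$ are generic so that all expressions below are defined. Define $$g_6(x)=(1-q)x^{-\alpha_1}\frac{(q,\ q^{l_1-l_2+1}t_1/t_2,\ q^{\lambda_1+l_1+\alpha_1+1/2}t_1/x;q)_\infty}{(q^{\lambda_1-h_1+l_1+\alpha_1},\ q^{\lambda_1-h_2+l_1+\alpha_1}t_1/t_2,\ q^{l_1+1/2}t_1/x;q)_\infty}\sum_{k=0}^{N}(q^{l_1+1/2}t_1)^{k+1}c_k(E_0)\,{}_3\phi_2\!\left(\begin{matrix}q^{\lambda_1-h_1+l_1+\alpha_1},\ q^{\lambda_1-h_2+l_1+\alpha_1}t_1/t_2,\ q^{l_1+1/2}t_1/x\\ q^{l_1-l_2+1}t_1/t_2,\ q^{\lambda_1+l_1+\alpha_1+1/2}t_1/x\end{matrix};q,q^{k+1}\right),$$ $$g_7(x)=(1-q)x^{-\alpha_1}\frac{(q,\ q^{-l_1+l_2+1}t_2/t_1,\ q^{\lambda_1+l_2+\alpha_1+1/2}t_2/x;q)_\infty}{(q^{\lambda_1-h_2+l_2+\alpha_1},\ q^{\lambda_1-h_1+l_2+\alpha_1}t_2/t_1,\ q^{l_2+1/2}t_2/x;q)_\infty}\sum_{k=0}^{N}(q^{l_2+1/2}t_2)^{k+1}c_k(E_0)\,{}_3\phi_2\!\left(\begin{matrix}q^{\lambda_1-h_2+l_2+\alpha_1},\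 q^{\lambda_1-h_1+l_2+\alpha_1}t_2/t_1,\ q^{l_2+1/2}t_2/x\\ q^{-l_1+l_2+1}t_2/t_1,\ q^{\lambda_1+l_2+\alpha_1+1/2}t_2/x\end{matrix};q,q^{k+1}\right),$$ $$g_8(x)=(1-q)x^{-\alpha_1}\frac{(q,\ q^{-\lambda_1-l_1-\alpha_1+3/2}x/t_1,\ q^{-\lambda_1-l_2-\alpha_1+3/2}x/t_2;q)_\infty}{(q^{-\lambda_1-\alpha_1+1},\ q^{-h_1+1/2}x/t_1,\ q^{-h_2+1/2}x/t_2;q)_\infty}\sum_{k=0}^{N}(q^{-\lambda_1-\alpha_1+1}x)^{k+1}c_k(E_0)\,{}_3\phi_2\!\left(\begin{matrix}q^{-\lambda_1-\alpha_1+1},\ q^{-h_1+1/2}x/t_1,\ q^{-h_2+1/2}x/t_2\\ q^{-\lambda_1-l_1-\alpha_1+3/2}x/t_1,\ q^{-\lambda_1-l_2-\alpha_1+3/2}x/t_2\end{matrix};q,q^{k+1}\right).$$ Then (iv) for all $i,j\in\{6,7,8\}$ the function $g_i(x)-g_j(x)$ satisfies $A^{\langle4\rangle}(x;h_1,h_2,l_1,l_2,\alpha_1,\alpha_2,\beta)g(x)=E_0g(x)$; and (v) each of $g_6,g_7,g_8$ satisfies $$A^{\langle4\rangle}(x;h_1,h_2,l_1,l_2,\alpha_1,\alpha_2,\beta)g(x)=E_0g(x)-(1-q)x^{-\alpha_1}q^{-\lambda_1+h_1+h_2+1}(q^{-\lambda_1-\alpha_1-N}-1)t_1t_2.$$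
   Context: $q\in\mathbb{C}$ with $0<|q|<1$; powers via a fixed branch of $\log q$ (for real $a$, $|q^a|=|q|^a$); $x^a$ fixed branch with $(qx)^a=q^ax^a$. $(a;q)_\infty=\prod_{k\ge0}(1-aq^k)$, $(a;q)_n=(a;q)_\infty/(aq^n;q)_\infty$, $(a_1,\dots,a_m;q)_n=\prod_i(a_i;q)_n$. ${}_3\phi_2\!\left(\begin{matrix}a_1,a_2,a_3\\ b_1,b_2\end{matrix};q,z\right)=\sum_{n\ge0}\frac{(a_1,a_2,a_3;q)_n}{(q,b_1,b_2;q)_n}z^n$. $t_1,t_2$ fixed non-zero; $T_x^{\pm1}g(x)=g(q^{\pm1}x)$; $A^{\langle 4\rangle}(x;h_1,h_2,l_1,l_2,\alpha_1,\alpha_2,\beta)=x^{-1}(x-q^{h_1+1/2}t_1)(x-q^{h_2+1/2}t_2)T_x^{-1}+q^{\alpha_1+\alpha_2}x^{-1}(x-q^{l_1-1/2}t_1)(x-q^{l_2-1/2}t_2)T_x-\{(q^{\alpha_1}+q^{\alpha_2})x+q^{(h_1+h_2+l_1+l_2+\alpha_1+\alpha_2)/2}(q^{\beta/2}+q^{-\beta/2})t_1t_2x^{-1}\}$. Polynomials: $x_n=t_1t_2q^{n-N+1+h_1+h_2-\alpha_1-2\lambda_1}(1-q^{-n})(1-q^{N-n+\lambda_1+\alpha_1})$, $y_n=q^{N-n+1/2+\lambda_1+\alpha_1+\alpha_2}(q^{l_1}t_1+q^{l_2}t_2)+q^{n-N-1/2-\lambda_1}(q^{h_1}t_1+q^{h_2}t_2)$,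 $z_n=q^{n-N-2+\alpha_1}(1-q^{N-n+1+\lambda_1+\alpha_2})(1-q^{N-n+2})$; $c_{-1}(E)=0$, $c_0(E)=1$, $c_n(E)x_n=c_{n-1}(E)(E+y_n)-c_{n-2}(E)z_n$ for $n=1,\dots,N$, $c(E)=x_1\cdots x_N[c_N(E)(E+y_{N+1})-c_{N-1}(E)z_{N+1}]$. *)

(* Defs.v *)
From Stdlib Require Import Reals List.
Import ListNotations.
From Coquelicot Require Import Coquelicot.
Open Scope C_scope.

Definition cexp (z : C) : C :=
  (exp (Re z) * cos (Im z), exp (Re z) * sin (Im z))%R.

Definition limC (u : nat -> C) : C := @lim C_CompleteNormedModule (filtermap u eventually).

Fixpoint prodC (f : nat -> C) (n : nat) : C :=
  match n with O => 1 | S m => prodC f m * f m end.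
Fixpoint sumC (f : nat -> C) (n : nat) : C :=
  match n with O => 0 | S m => sumC f m + f m end.

Definition qpoch (q a : C) (n : nat) : C := prodC (fun k => 1 - a * Cpow q k) n.
Definition qpoch_inf (q a : C) : C := limC (qpoch q a).

Definition phi32 (q a1 a2 a3 b1 b2 z : C) : C :=
  limC (sumC (fun n => qpoch q a1 n * qpoch q a2 n * qpoch q a3 n
            / (qpoch q q n * qpoch q b1 n * qpoch q b2 n) * Cpow z n)).

Definition qgen (q a : C) : Prop := forall n : nat, 1 - a * Cpow q n <> 0.

(* the polynomials c_n(E): cseq n = (c_{n-1}(E), c_n(E)) *)
Section Cpoly.
Variables (qp : R -> C) (t1 t2 : C) (N : nat) (h1 h2 l1 l2 a1 a2 lam1 : R) (E : C).
Definition xn (n : nat) : C :=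
  t1 * t2 * qp (INR n - INR N + 1 + h1 + h2 - a1 - 2 * lam1)%R
     * (1 - qp (- INR n)%R) * (1 - qp (INR N - INR n + lam1 + a1)%R).
Definition yn (n : nat) : C :=
  qp (INR N - INR n + /2 + lam1 + a1 + a2)%R * (qp l1 * t1 + qp l2 * t2)
  + qp (INR n - INR N - /2 - lam1)%R * (qp h1 * t1 + qp h2 * t2).
Definition zn (n : nat) : C :=
  qp (INR n - INR N - 2 + a1)%R * (1 - qp (INR N - INR n + 1 + lam1 + a2)%R)
     * (1 - qp (INR N - INR n + 2)%R).
Fixpoint cseq (n : nat) : C * C :=
  match n with
  | O => (RtoC 0, RtoC 1)
  | S m => let (a, b) := cseq m in
           (b, (b * (E + yn (S m)) - a * zn (S m)) / xn (S m))
  end.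
Definition cn (n : nat) : C := snd (cseq n).
Definition cE : C :=
  prodC (fun k => xn (S k)) N
   * (snd (cseq N) * (E + yn (S N)) - fst (cseq N) * zn (S N)).
End Cpoly.

(* The q-difference operator A^<4>(x;h1,h2,l1,l2,a1,a2,beta) applied to g at x;
   qp a stands for q^a;  T_x^{-1} g(x) = g(x/q), T_x g(x) = g(q x). *)
Definition A4 (q : C) (qp : R -> C) (t1 t2 : C) (h1 h2 l1 l2 a1 a2 beta : R)
  (g : C -> C) (x : C) : C :=
  / x * (x - qp (h1 + /2)%R * t1) * (x - qp (h2 + /2)%R * t2) * g (x / q)
  + qp (a1 + a2)%R * / x * (x - qp (l1 - /2)%R * t1) * (x - qp (l2 - /2)%R * t2) * g (q * x)
  - ((qp a1 + qp a2) * x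
     + qp ((h1 + h2 + l1 + l2 + a1 + a2) / 2)%R * (qp (beta / 2)%R + qp (- beta / 2)%R)
       * t1 * t2 * / x) * g x.

Definition gshape (q : C) (ypow : C) (c : nat -> C) (N : nat) (w A1 A2 A3 B1 B2 : C) : C :=
  (1 - q) * ypow
  * (qpoch_inf q q * qpoch_inf q B1 * qpoch_inf q B2)
  / (qpoch_inf q A1 * qpoch_inf q A2 * qpoch_inf q A3)
  * sumC (fun k => Cpow w (S k) * c k * phi32 q A1 A2 A3 B1 B2 (Cpow q (S k))) (S N).

Section Gfuns.
Variables (q : C) (qp : R -> C) (xp : R -> C -> C) (t1 t2 : C) (N : nat)
          (h1 h2 l1 l2 a1 a2 lam1 : R) (E0 : C).
Let c := cn qp t1 t2 N h1 h2 l1 l2 a1 a2 lam1 E0.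

(* the five parameters (A1,A2,A3,B1,B2) of g6, g7, g8 at the point y *)
Definition par6 (y : C) : list C :=
  [qp (lam1 - h1 + l1 + a1)%R; qp (lam1 - h2 + l1 + a1)%R * t1 / t2;
   qp (l1 + /2)%R * t1 / y; qp (l1 - l2 + 1)%R * t1 / t2;
   qp (lam1 + l1 + a1 + /2)%R * t1 / y].
Definition par7 (y : C) : list C :=
  [qp (lam1 - h2 + l2 + a1)%R; qp (lam1 - h1 + l2 + a1)%R * t2 / t1;
   qp (l2 + /2)%R * t2 / y; qp (- l1 + l2 + 1)%R * t2 / t1;
   qp (lam1 + l2 + a1 + /2)%R * t2 / y].
Definition par8 (y : C) : list C :=
  [qp (- lam1 - a1 + 1)%R; qp (- h1 + /2)%R * y / t1; qp (- h2 + /2)%R * y / t2;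
   qp (- lam1 - l1 - a1 + 3/2)%R * y / t1; qp (- lam1 - l2 - a1 + 3/2)%R * y / t2].

Definition g6 (y : C) : C :=
  gshape q (xp (- a1)%R y) c N (qp (l1 + /2)%R * t1)
    (qp (lam1 - h1 + l1 + a1)%R) (qp (lam1 - h2 + l1 + a1)%R * t1 / t2)
    (qp (l1 + /2)%R * t1 / y) (qp (l1 - l2 + 1)%R * t1 / t2)
    (qp (lam1 + l1 + a1 + /2)%R * t1 / y).
Definition g7 (y : C) : C :=
  gshape q (xp (- a1)%R y) c N (qp (l2 + /2)%R * t2)
    (qp (lam1 - h2 + l2 + a1)%R) (qp (lam1 - h1 + l2 + a1)%R * t2 / t1)
    (qp (l2 + /2)%R * t2 / y) (qp (- l1 + l2 + 1)%R * t2 / t1)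
    (qp (lam1 + l2 + a1 + /2)%R * t2 / y).
Definition g8 (y : C) : C :=
  gshape q (xp (- a1)%R y) c N (qp (- lam1 - a1 + 1)%R * y)
    (qp (- lam1 - a1 + 1)%R) (qp (- h1 + /2)%R * y / t1) (qp (- h2 + /2)%R * y / t2)
    (qp (- lam1 - l1 - a1 + 3/2)%R * y / t1) (qp (- lam1 - l2 - a1 + 3/2)%R * y / t2).

Definition gfun (i : nat) : C -> C :=
  match i with 6 => g6 | 7 => g7 | 8 => g8 | _ => fun _ => 0 end.

(* genericity at the point y: y <> 0 and every parameter A_i, B_i of
   g6, g7, g8 is q-generic, so that all denominators are nonzero *)
Definition generic_at (y : C) : Prop :=
  y <> 0 /\ (forall a, List.In a (par6 y ++ par7 y ++ par8 y) -> qgen q a).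
End Gfuns.

(* Main.v *)
Require Import Defs.
From Stdlib Require Import Reals Lra Lia Arith.
From Coquelicot Require Import Coquelicot.
Open Scope C_scope.

Definition cv (u : nat -> C) (l : C) : Prop :=
  forall eps : R, (0 < eps)%R -> exists M : nat, forall n, (M <= n)%nat -> (Cmod (u n - l) < eps)%R.

Lemma Cmod_sub_sym (a b : C) : Cmod (a - b) = Cmod (b - a).
Proof. replace (a - b) with (- (b - a)) by ring. apply Cmod_opp. Qed.

Lemma Cmod_tri3 (a b c : C) : (Cmod (a - c) <= Cmod (a - b) + Cmod (b - c))%R.
Proof. replace (a - c) with ((a - b) + (b - c)) by ring. apply Cmod_triangle. Qed.

Lemma cv_unique u l1 l2 : cv u l1 -> cv u l2 -> l1 = l2.
Proof.
  intros H1 H2. apply Ceq_minus. apply Cmod_eq_0.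
  destruct (Req_dec (Cmod (l1 - l2)) 0) as [e|ne]; [exact e|].
  exfalso. set (d := Cmod (l1 - l2)). assert (dp : (0 < d)%R) by (pose proof (Cmod_ge_0 (l1-l2)); unfold d in *; lra).
  destruct (H1 (d/2)%R) as [M1 HM1]; [lra|]. destruct (H2 (d/2)%R) as [M2 HM2]; [lra|].
  specialize (HM1 (M1+M2)%nat). specialize (HM2 (M1+M2)%nat).
  assert (A1 : (M1 <= M1 + M2)%nat) by lia. assert (A2 : (M2 <= M1 + M2)%nat) by lia.
  specialize (HM1 A1). specialize (HM2 A2).
  pose proof (Cmod_tri3 l1 (u (M1+M2)%nat) l2). rewrite (Cmod_sub_sym l1 (u _)) in H. unfold d in *. lra.
Qed.

Lemma cv_limC u l : cv u l -> limC u = l.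
Proof.
  intros H. unfold limC.
  set (F := filtermap u eventually).
  assert (PF : ProperFilter F). { apply filtermap_proper_filter. apply eventually_filter. }
  assert (CF : cauchy F).
  { intros eps. exists l. unfold F, filtermap. destruct (H eps (cond_pos eps)) as [M HM].
    exists M. intros n Hn. apply C_NormedModule_mixin_compat1.
    unfold minus, plus, opp; simpl. change (Cmod (u n - l) < eps)%R. apply HM. lia. }
  pose proof (@complete_cauchy C_CompleteNormedModule F PF CF) as HC.
  set (L := @lim C_CompleteNormedModule F) in *.
  apply cv_unique with u; [|exact H].
  intros eps Heps.
  assert (e2 : (0 < eps / 2)%R) by lra.
  destruct (HC (mkposreal (eps/2/sqrt 2) ltac:(apply Rdiv_lt_0_compat; [lra| apply sqrt_lt_R0; lra]))) as [M HM].
  exists M. intros n Hn. specialize (HM n Hn).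
  apply C_NormedModule_mixin_compat2 in HM. simpl in HM.
  unfold minus, plus, opp in HM; simpl in HM.
  assert (sqrt 2 * (eps / 2 / sqrt 2) = eps/2)%R.
  { field. apply Rgt_not_eq. apply sqrt_lt_R0. lra. }
  rewrite H0 in HM. apply Rlt_trans with (eps/2)%R; [exact HM | lra].
Qed.

Lemma cauchy_cv (u : nat -> C) :
  (forall eps : R, (0 < eps)%R -> exists M, forall n m, (M <= n)%nat -> (M <= m)%nat -> (Cmod (u n - u m) < eps)%R) ->
  cv u (limC u).
Proof.
  intros H. unfold limC.
  set (F := filtermap u eventually).
  assert (PF : ProperFilter F). { apply filtermap_proper_filter. apply eventually_filter. }
  assert (CF : cauchy F).
  { intros eps. destruct (H eps (cond_pos eps)) as [M HM]. exists (u M). unfold F, filtermap.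
    exists M. intros n Hn. apply C_NormedModule_mixin_compat1.
    unfold minus, plus, opp; simpl. change (Cmod (u n - u M) < eps)%R. apply HM; lia. }
  pose proof (@complete_cauchy C_CompleteNormedModule F PF CF) as HC.
  set (L := @lim C_CompleteNormedModule F) in *.
  intros eps Heps.
  destruct (HC (mkposreal (eps/2/sqrt 2) ltac:(apply Rdiv_lt_0_compat; [lra| apply sqrt_lt_R0; lra]))) as [M HM].
  exists M. intros n Hn. specialize (HM n Hn).
  apply C_NormedModule_mixin_compat2 in HM. simpl in HM.
  unfold minus, plus, opp in HM; simpl in HM.
  assert (sqrt 2 * (eps / 2 / sqrt 2) = eps/2)%R.
  { field. apply Rgt_not_eq. apply sqrt_lt_R0. lra. }
  rewrite H0 in HM. apply Rlt_trans with (eps/2)%R; [exact HM | lra].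
Qed.

Lemma cv_ext u v l : (forall n, u n = v n) -> cv u l -> cv v l.
Proof. intros E H eps He. destruct (H eps He) as [M HM]. exists M. intros n Hn. rewrite <- E. auto. Qed.

Lemma cv_ext_ev u v l M0 : (forall n, (M0 <= n)%nat -> u n = v n) -> cv u l -> cv v l.
Proof. intros E H eps He. destruct (H eps He) as [M HM]. exists (M + M0)%nat. intros n Hn. rewrite <- E by lia. apply HM; lia. Qed.

Lemma cv_const c : cv (fun _ => c) c.
Proof. intros eps He. exists 0%nat. intros n _. replace (c - c) with (RtoC 0) by ring. rewrite Cmod_0. exact He. Qed.

Lemma cv_plus u v a b : cv u a -> cv v b -> cv (fun n => u n + v n) (a + b).
Proof.
  intros Hu Hv eps He. destruct (Hu (eps/2)%R) as [M1 H1]; [lra|]. destruct (Hv (eps/2)%R) as [M2 H2]; [lra|].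
  exists (M1+M2)%nat. intros n Hn. replace (u n + v n - (a + b)) with ((u n - a) + (v n - b)) by ring.
  eapply Rle_lt_trans; [apply Cmod_triangle|]. specialize (H1 n ltac:(lia)). specialize (H2 n ltac:(lia)). lra.
Qed.

Lemma cv_opp u a : cv u a -> cv (fun n => - u n) (- a).
Proof. intros Hu eps He. destruct (Hu eps He) as [M H]. exists M. intros n Hn.
  replace (- u n - - a) with (- (u n - a)) by ring. rewrite Cmod_opp. auto. Qed.

Lemma cv_minus u v a b : cv u a -> cv v b -> cv (fun n => u n - v n) (a - b).
Proof. intros. apply cv_plus; auto. apply cv_opp; auto. Qed.

Lemma cv_bounded u a : cv u a -> exists B M, (0 < B)%R /\ forall n, (M <= n)%nat -> (Cmod (u n) <= B)%R.
Proof.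
  intros H. destruct (H 1%R) as [M HM]; [lra|]. exists (Cmod a + 1)%R, M. split.
  - pose proof (Cmod_ge_0 a). lra.
  - intros n Hn. specialize (HM n Hn). replace (u n) with ((u n - a) + a) by ring.
    eapply Rle_trans; [apply Cmod_triangle|]. lra.
Qed.

Lemma cv_mult u v a b : cv u a -> cv v b -> cv (fun n => u n * v n) (a * b).
Proof.
  intros Hu Hv. destruct (cv_bounded u a Hu) as [B [M0 [HB HB']]].
  intros eps He.
  set (K := (B + Cmod b + 1)%R).
  assert (HK : (0 < K)%R) by (pose proof (Cmod_ge_0 b); unfold K; lra).
  destruct (Hu (eps / K)%R) as [M1 H1]; [apply Rdiv_lt_0_compat; lra|].
  destruct (Hv (eps / K)%R) as [M2 H2]; [apply Rdiv_lt_0_compat; lra|].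
  exists (M0 + M1 + M2)%nat. intros n Hn.
  replace (u n * v n - a * b) with (u n * (v n - b) + (u n - a) * b) by ring.
  eapply Rle_lt_trans; [apply Cmod_triangle|]. rewrite !Cmod_mult.
  specialize (H1 n ltac:(lia)). specialize (H2 n ltac:(lia)). specialize (HB' n ltac:(lia)).
  pose proof (Cmod_ge_0 (v n - b)). pose proof (Cmod_ge_0 (u n - a)). pose proof (Cmod_ge_0 b).
  pose proof (Cmod_ge_0 (u n)).
  assert (Cmod (u n) * Cmod (v n - b) <= B * (eps / K))%R by (apply Rmult_le_compat; lra).
  assert (Cmod (u n - a) * Cmod b <= (eps / K) * Cmod b)%R by (apply Rmult_le_compat_r; lra).
  assert (B * (eps / K) + eps / K * Cmod b < eps)%R.
  { replace (B * (eps / K) + eps / K * Cmod b)%R with (eps * ((B + Cmod b) / K))%R by (field; lra).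
    rewrite <- (Rmult_1_r eps) at 2. apply Rmult_lt_compat_l; [lra|].
    apply (Rmult_lt_reg_r K); [lra|]. unfold Rdiv. rewrite Rmult_assoc, Rinv_l by lra. unfold K; lra. }
  lra.
Qed.

Lemma cv_scal c u a : cv u a -> cv (fun n => c * u n) (c * a).
Proof. intros. apply cv_mult; auto. apply cv_const. Qed.

Lemma cv_inv (u : nat -> C) (a : C) : a <> 0 -> cv u a -> cv (fun n => / u n) (/ a).
Proof.
  intros Ha Hu.
  assert (Hm : (0 < Cmod a)%R). { apply Cmod_gt_0. exact Ha. }
  destruct (Hu (Cmod a / 2)%R) as [M0 H0]; [lra|].
  intros eps He.
  destruct (Hu (eps * (Cmod a * Cmod a / 2))%R) as [M1 H1].
  { apply Rmult_lt_0_compat; [lra|]. apply Rmult_lt_0_compat; [|lra]. apply Rmult_lt_0_compat; lra. }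
  exists (M0 + M1)%nat. intros n Hn.
  specialize (H0 n ltac:(lia)). specialize (H1 n ltac:(lia)).
  assert (Hun : (Cmod a / 2 <= Cmod (u n))%R).
  { pose proof (Cmod_tri3 a (u n) 0). rewrite Cmod_sub_sym in H0.
    replace (a - 0) with a in H by ring. replace (u n - 0) with (u n) in H by ring. lra. }
  assert (un0 : u n <> 0). { intro E. rewrite E, Cmod_0 in Hun. lra. }
  replace (/ u n - / a) with ((a - u n) / (u n * a)) by (field; auto).
  rewrite Cmod_div by (apply Cmult_neq_0; auto). rewrite Cmod_mult, Cmod_sub_sym.
  apply (Rmult_lt_reg_r (Cmod (u n) * Cmod a)). { apply Rmult_lt_0_compat; lra. }
  unfold Rdiv. rewrite Rmult_assoc, Rinv_l. 2: { apply Rgt_not_eq. apply Rmult_lt_0_compat; lra. }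
  rewrite Rmult_1_r.
  apply Rlt_le_trans with (eps * (Cmod a * Cmod a / 2))%R; [exact H1|].
  replace (eps * (Cmod a * Cmod a / 2))%R with (eps * Cmod a * (Cmod a / 2))%R by field.
  replace (eps * (Cmod (u n) * Cmod a))%R with (eps * Cmod a * Cmod (u n))%R by ring.
  apply Rmult_le_compat_l; [|exact Hun]. apply Rmult_le_pos; lra.
Qed.

Lemma cv_div (u v : nat -> C) (a b : C) : b <> 0 -> cv u a -> cv v b -> cv (fun n => u n / v n) (a / b).
Proof. intros. unfold Cdiv. apply cv_mult; auto. apply cv_inv; auto. Qed.

Lemma cv_shift u a : cv u a -> cv (fun n => u (S n)) a.
Proof. intros H eps He. destruct (H eps He) as [M HM]. exists M. intros. apply HM. lia. Qed.

Lemma cv_sumC (f : nat -> nat -> C) (l : nat -> C) K :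
  (forall k, (k < K)%nat -> cv (fun n => f n k) (l k)) -> cv (fun n => sumC (f n) K) (sumC l K).
Proof.
  induction K; intros H; simpl.
  - apply cv_const.
  - apply cv_plus. apply IHK. intros; apply H; lia. apply H; lia.
Qed.

Lemma cv_norm0 u a : (forall eps, (0 < eps)%R -> exists M, forall n, (M <= n)%nat -> (Cmod (u n - a) <= eps)%R) -> cv u a.
Proof. intros H eps He. destruct (H (eps/2)%R) as [M HM]; [lra|]. exists M. intros. specialize (HM n H0). lra. Qed.

Lemma cv_Cpow (q : C) : (Cmod q < 1)%R -> cv (fun n => Cpow q n) 0.
Proof.
  intros Hq eps He. destruct (pow_lt_1_zero (Cmod q) ltac:(rewrite Rabs_pos_eq; [lra| apply Cmod_ge_0]) eps He) as [M HM].
  exists M. intros n Hn. replace (Cpow q n - 0) with (Cpow q n) by ring. rewrite Cmod_pow.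
  specialize (HM n ltac:(lia)). rewrite Rabs_pos_eq in HM; auto. apply pow_le, Cmod_ge_0.
Qed.

Lemma Cpow_add (q : C) m n : Cpow q (m + n) = Cpow q m * Cpow q n.
Proof. induction m; simpl. ring. rewrite IHm. ring. Qed.

Lemma qpoch_add q a m n : qpoch q a (m + n) = qpoch q a m * qpoch q (a * Cpow q m) n.
Proof.
  unfold qpoch. induction n; simpl.
  - rewrite Nat.add_0_r. ring.
  - rewrite Nat.add_succ_r. simpl. rewrite IHn, Cpow_add. ring.
Qed.

Lemma qpoch_S q a n : qpoch q a (S n) = qpoch q a n * (1 - a * Cpow q n).
Proof. reflexivity. Qed.

Fixpoint RP (f : nat -> R) (n : nat) : R := match n with O => 1%R | S m => (RP f m * (1 + f m))%R end.
Fixpoint RS (f : nat -> R) (n : nat) : R := match n with O => 0%R | S m => (RS f m + f m)%R end.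

Lemma pow_le_one (r : R) n : (0 <= r <= 1)%R -> (r ^ n <= 1)%R.
Proof. intros H. rewrite <- (pow1 n). apply pow_incr. lra. Qed.

Lemma RS_ge0 f n : (forall k, 0 <= f k)%R -> (0 <= RS f n)%R.
Proof. intros H. induction n; simpl. lra. specialize (H n). lra. Qed.

Lemma RP_ge1 f n : (forall k, 0 <= f k)%R -> (1 <= RP f n)%R.
Proof. intros H. induction n; simpl. lra. specialize (H n). nra. Qed.

Lemma RP_bound f n : (forall k, 0 <= f k)%R -> (RS f n <= 1/2)%R -> (RP f n <= 1 + 2 * RS f n)%R.
Proof.
  intros H. induction n; simpl; intros Hs. lra.
  pose proof (H n). pose proof (RS_ge0 f n H).
  assert (IH : (RP f n <= 1 + 2 * RS f n)%R) by (apply IHn; lra).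
  pose proof (RP_ge1 f n H). nra.
Qed.

Lemma geo_sum (r : R) n : (0 <= r < 1)%R -> (RS (fun k => r ^ k) n <= / (1 - r))%R.
Proof.
  intros Hr. assert (E : (RS (fun k => r ^ k) n * (1 - r) = 1 - r ^ n)%R).
  { induction n; simpl. ring. rewrite Rmult_plus_distr_r, IHn. ring. }
  assert (0 <= r ^ n)%R by (apply pow_le; lra).
  apply (Rmult_le_reg_r (1 - r)); [lra|]. rewrite E, Rinv_l by lra. lra.
Qed.

Lemma RS_scal c f n : RS (fun k => c * f k)%R n = (c * RS f n)%R.
Proof. induction n; simpl. ring. rewrite IHn. ring. Qed.

Lemma qpoch_dev q b n :
  (Cmod (qpoch q b n - 1) <= RP (fun k => Cmod b * Cmod q ^ k)%R n - 1)%R.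
Proof.
  induction n; simpl.
  - unfold qpoch; simpl. replace (1 - 1) with (RtoC 0) by ring. rewrite Cmod_0. lra.
  - rewrite qpoch_S.
    replace (qpoch q b n * (1 - b * Cpow q n) - 1) with ((qpoch q b n - 1) * (1 - b * Cpow q n) + - (b * Cpow q n)) by ring.
    eapply Rle_trans; [apply Cmod_triangle|]. rewrite Cmod_mult, Cmod_opp, Cmod_mult, Cmod_pow.
    assert (Cmod (1 - b * Cpow q n) <= 1 + Cmod b * Cmod q ^ n)%R.
    { eapply Rle_trans; [apply Cmod_triangle|]. rewrite Cmod_1, Cmod_opp, Cmod_mult, Cmod_pow. lra. }
    pose proof (Cmod_ge_0 (qpoch q b n - 1)).
    assert (0 <= Cmod b * Cmod q ^ n)%R by (apply Rmult_le_pos; [apply Cmod_ge_0| apply pow_le, Cmod_ge_0]).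
    nra.
Qed.

Section Q.
Variable q : C.
Hypothesis Hq1 : (Cmod q < 1)%R.

Definition tau (b : C) : R := (Cmod b / (1 - Cmod q))%R.

Lemma tau_ge0 b : (0 <= tau b)%R.
Proof. unfold tau. apply Rdiv_le_0_compat. apply Cmod_ge_0. lra. Qed.

Lemma qpoch_small b n : (tau b <= 1/4)%R -> (Cmod (qpoch q b n - 1) <= 2 * tau b)%R.
Proof.
  intros Ht. eapply Rle_trans; [apply qpoch_dev|].
  assert (HS : (RS (fun k => Cmod b * Cmod q ^ k)%R n <= tau b)%R).
  { rewrite RS_scal. unfold tau, Rdiv. apply Rmult_le_compat_l; [apply Cmod_ge_0|].
    apply geo_sum. split; [apply Cmod_ge_0|lra]. }
  assert (Hpos : forall k, (0 <= Cmod b * Cmod q ^ k)%R).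
  { intros. apply Rmult_le_pos; [apply Cmod_ge_0| apply pow_le, Cmod_ge_0]. }
  pose proof (RP_bound _ n Hpos ltac:(lra)). lra.
Qed.

Lemma tau_geo b n : tau (b * Cpow q n) = (tau b * Cmod q ^ n)%R.
Proof. unfold tau. rewrite Cmod_mult, Cmod_pow. field. lra. Qed.

Lemma tau_small b : exists m, forall n, (m <= n)%nat -> (tau (b * Cpow q n) <= 1/4)%R.
Proof.
  destruct (Req_dec (tau b) 0) as [E|NE].
  - exists 0%nat. intros. rewrite tau_geo, E. lra.
  - assert (tp : (0 < tau b)%R) by (pose proof (tau_ge0 b); lra).
    destruct (pow_lt_1_zero (Cmod q) ltac:(rewrite Rabs_pos_eq; [lra| apply Cmod_ge_0]) (/ (4 * tau b))%R) as [M HM].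
    { apply Rinv_0_lt_compat. lra. }
    exists M. intros n Hn. rewrite tau_geo. specialize (HM n ltac:(lia)).
    rewrite Rabs_pos_eq in HM by (apply pow_le, Cmod_ge_0).
    apply Rle_trans with (tau b * / (4 * tau b))%R. apply Rmult_le_compat_l; lra.
    right. field. lra.
Qed.

Lemma qpoch_cauchy_small b : (tau b <= 1/4)%R ->
  forall eps, (0 < eps)%R -> exists M, forall n m, (M <= n)%nat -> (M <= m)%nat -> (Cmod (qpoch q b n - qpoch q b m) < eps)%R.
Proof.
  intros Ht eps He.
  assert (Hb : forall n, (Cmod (qpoch q b n) <= 3/2)%R).
  { intros n. pose proof (qpoch_small b n Ht). replace (qpoch q b n) with ((qpoch q b n - 1) + 1) by ring.
    eapply Rle_trans; [apply Cmod_triangle|]. rewrite Cmod_1. lra. }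
  assert (key : forall n k, (Cmod (qpoch q b (n + k) - qpoch q b n) <= 3 * tau b * Cmod q ^ n)%R).
  { intros n k. rewrite qpoch_add.
    replace (qpoch q b n * qpoch q (b * Cpow q n) k - qpoch q b n) with (qpoch q b n * (qpoch q (b * Cpow q n) k - 1)) by ring.
    rewrite Cmod_mult.
    assert (Ht' : (tau (b * Cpow q n) <= 1/4)%R).
    { rewrite tau_geo. assert (Cmod q ^ n <= 1)%R by (apply pow_le_one; split; [apply Cmod_ge_0|lra]).
      pose proof (tau_ge0 b). nra. }
    pose proof (qpoch_small (b * Cpow q n) k Ht'). rewrite tau_geo in H.
    pose proof (Cmod_ge_0 (qpoch q b n)). pose proof (Cmod_ge_0 (qpoch q (b * Cpow q n) k - 1)).
    specialize (Hb n). nra. }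
  destruct (Req_dec (tau b) 0) as [E|NE].
  - exists 0%nat. intros n m _ _.
    assert (forall n k, Cmod (qpoch q b (n + k) - qpoch q b n) = 0)%R.
    { intros n0 k. specialize (key n0 k). rewrite E in key. pose proof (Cmod_ge_0 (qpoch q b (n0 + k) - qpoch q b n0)). nra. }
    destruct (le_lt_dec n m).
    + replace m with (n + (m - n))%nat by lia. rewrite Cmod_sub_sym, H. lra.
    + replace n with (m + (n - m))%nat by lia. rewrite H. lra.
  - assert (tp : (0 < tau b)%R) by (pose proof (tau_ge0 b); lra).
    destruct (pow_lt_1_zero (Cmod q) ltac:(rewrite Rabs_pos_eq; [lra| apply Cmod_ge_0]) (eps / (3 * tau b))%R) as [M HM].
    { apply Rdiv_lt_0_compat; lra. }
    exists M. intros n m Hn Hm.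
    assert (Hx : forall n, (M <= n)%nat -> (3 * tau b * Cmod q ^ n < eps)%R).
    { intros n0 Hn0. specialize (HM n0 ltac:(lia)). rewrite Rabs_pos_eq in HM by (apply pow_le, Cmod_ge_0).
      apply (Rmult_lt_compat_l (3 * tau b)) in HM; [|lra]. replace (3 * tau b * (eps / (3 * tau b)))%R with eps in HM by (field; lra). lra. }
    destruct (le_lt_dec n m).
    + replace m with (n + (m - n))%nat by lia. rewrite Cmod_sub_sym. eapply Rle_lt_trans; [apply key|]. apply Hx; lia.
    + replace n with (m + (n - m))%nat by lia. eapply Rle_lt_trans; [apply key|]. apply Hx; lia.
Qed.

Lemma qpoch_cv b : cv (qpoch q b) (qpoch_inf q b).
Proof.
  unfold qpoch_inf. apply cauchy_cv.
  destruct (tau_small b) as [m0 Hm0].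
  intros eps He.
  set (P := qpoch q b m0). set (b' := b * Cpow q m0).
  destruct (qpoch_cauchy_small b' (Hm0 m0 (le_n _)) (eps / (Cmod P + 1))%R) as [M HM].
  { apply Rdiv_lt_0_compat; [lra|]. pose proof (Cmod_ge_0 P); lra. }
  exists (m0 + M)%nat. intros n m Hn Hm.
  replace n with (m0 + (n - m0))%nat by lia. replace m with (m0 + (m - m0))%nat by lia.
  rewrite !qpoch_add. fold P b'.
  replace (P * qpoch q b' (n - m0) - P * qpoch q b' (m - m0)) with (P * (qpoch q b' (n - m0) - qpoch q b' (m - m0))) by ring.
  rewrite Cmod_mult. specialize (HM (n - m0)%nat (m - m0)%nat ltac:(lia) ltac:(lia)).
  pose proof (Cmod_ge_0 P).
  apply Rle_lt_trans with ((Cmod P + 1) * Cmod (qpoch q b' (n - m0) - qpoch q b' (m - m0)))%R.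
  { pose proof (Cmod_ge_0 (qpoch q b' (n - m0) - qpoch q b' (m - m0))). nra. }
  apply (Rmult_lt_compat_l (Cmod P + 1)) in HM; [|lra].
  replace ((Cmod P + 1) * (eps / (Cmod P + 1)))%R with eps in HM by (field; lra). exact HM.
Qed.

Lemma cv_shiftk u a m : cv u a -> cv (fun n => u (m + n)%nat) a.
Proof. intros H eps He. destruct (H eps He) as [M HM]. exists M. intros. apply HM. lia. Qed.

Lemma qinf_shift b m : qpoch_inf q b = qpoch q b m * qpoch_inf q (b * Cpow q m).
Proof.
  apply (cv_unique (fun n => qpoch q b (m + n))).
  - apply cv_shiftk, qpoch_cv.
  - apply cv_ext with (fun n => qpoch q b m * qpoch q (b * Cpow q m) n).
    + intros; rewrite qpoch_add; auto.
    + apply cv_scal, qpoch_cv.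
Qed.

Lemma qinf_1 b : qpoch_inf q b = (1 - b) * qpoch_inf q (b * q).
Proof.
  rewrite (qinf_shift b 1). unfold qpoch; simpl. f_equal. ring. f_equal. ring.
Qed.

Lemma cv_le_bound u a c B : cv u a -> (exists M, forall n, (M <= n)%nat -> (Cmod (u n - c) <= B)%R) -> (Cmod (a - c) <= B)%R.
Proof.
  intros H [M HM]. apply Rnot_lt_le. intro Hlt.
  destruct (H (Cmod (a - c) - B)%R) as [M1 HM1]; [lra|].
  specialize (HM (M + M1)%nat ltac:(lia)). specialize (HM1 (M + M1)%nat ltac:(lia)).
  pose proof (Cmod_tri3 a (u (M+M1)%nat) c). rewrite (Cmod_sub_sym a (u _)) in H0. lra.
Qed.

Lemma qinf_small b : (tau b <= 1/4)%R -> (Cmod (qpoch_inf q b - 1) <= 2 * tau b)%R.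
Proof.
  intros Ht. apply cv_le_bound with (qpoch q b). apply qpoch_cv. exists 0%nat. intros. apply qpoch_small; auto.
Qed.

Lemma qinf_small_nz b : (tau b <= 1/4)%R -> qpoch_inf q b <> 0.
Proof.
  intros Ht E. pose proof (qinf_small b Ht). rewrite E in H. replace (0 - 1) with (- (1)) in H by ring.
  rewrite Cmod_opp, Cmod_1 in H. lra.
Qed.

Lemma C1_nz : (RtoC 1) <> RtoC 0.
Proof. intro H. apply (f_equal fst) in H. simpl in H. lra. Qed.

Lemma prodC_nz (f : nat -> C) n : (forall k, (k < n)%nat -> f k <> 0) -> prodC f n <> 0.
Proof. induction n; simpl; intros H. apply C1_nz. apply Cmult_neq_0. apply IHn; intros; apply H; lia. apply H; lia. Qed.

Lemma qinf_nz b : qgen q b -> qpoch_inf q b <> 0.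
Proof.
  intros Hg. destruct (tau_small b) as [m Hm]. rewrite (qinf_shift b m).
  apply Cmult_neq_0. unfold qpoch. apply prodC_nz. intros; apply Hg.
  apply qinf_small_nz. apply Hm. lia.
Qed.

Lemma qinf_geo_cv b : cv (fun n => qpoch_inf q (b * Cpow q n)) 1.
Proof.
  destruct (tau_small b) as [m Hm].
  apply cv_norm0. intros eps He.
  destruct (Req_dec (tau b) 0) as [E|NE].
  - exists m. intros n Hn. pose proof (qinf_small _ (Hm n Hn)). rewrite tau_geo, E in H. lra.
  - assert (tp : (0 < tau b)%R) by (pose proof (tau_ge0 b); lra).
    destruct (pow_lt_1_zero (Cmod q) ltac:(rewrite Rabs_pos_eq; [lra| apply Cmod_ge_0]) (eps / (2 * tau b))%R) as [M HM].
    { apply Rdiv_lt_0_compat; lra. }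
    exists (m + M)%nat. intros n Hn. pose proof (qinf_small _ (Hm n ltac:(lia))). rewrite tau_geo in H.
    specialize (HM n ltac:(lia)). rewrite Rabs_pos_eq in HM by (apply pow_le, Cmod_ge_0).
    apply (Rmult_lt_compat_l (2 * tau b)) in HM; [|lra].
    replace (2 * tau b * (eps / (2 * tau b)))%R with eps in HM by (field; lra). lra.
Qed.

End Q.

Lemma Cinv_nz (a : C) : a <> 0 -> / a <> 0.
Proof. intros H E. apply C1_nz. transitivity (a * / a). field; auto. rewrite E. ring. Qed.

Lemma sumC_ext (f g : nat -> C) n : (forall k, (k < n)%nat -> f k = g k) -> sumC f n = sumC g n.
Proof. induction n; simpl; intros H; auto. rewrite IHn, H; auto; intros; apply H; lia. Qed.

Lemma sumC_plus (f g : nat -> C) n : sumC (fun k => f k + g k) n = sumC f n + sumC g n.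
Proof. induction n; simpl. ring. rewrite IHn. ring. Qed.

Lemma sumC_scal (c : C) (f : nat -> C) n : sumC (fun k => c * f k) n = c * sumC f n.
Proof. induction n; simpl. ring. rewrite IHn. ring. Qed.

Lemma sumC_swap (f : nat -> nat -> C) M K :
  sumC (fun n => sumC (fun k => f n k) K) M = sumC (fun k => sumC (fun n => f n k) M) K.
Proof.
  induction M; simpl.
  - induction K; simpl; auto. rewrite <- IHK. ring.
  - rewrite IHM. rewrite <- sumC_plus. reflexivity.
Qed.

Lemma sumC_add (f : nat -> C) n k : sumC f (n + k) = sumC f n + sumC (fun j => f (n + j)%nat) k.
Proof. induction k; simpl. rewrite Nat.add_0_r. ring. rewrite Nat.add_succ_r. simpl. rewrite IHk. ring. Qed.

Lemma Cmod_sumC_le (f : nat -> C) (g : nat -> R) k : (forall j, (j < k)%nat -> Cmod (f j) <= g j)%R ->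
  (Cmod (sumC f k) <= RS g k)%R.
Proof.
  induction k; simpl; intros H. rewrite Cmod_0. lra.
  eapply Rle_trans; [apply Cmod_triangle|].
  assert (Cmod (sumC f k) <= RS g k)%R by (apply IHk; intros; apply H; lia).
  specialize (H k ltac:(lia)). lra.
Qed.

Lemma series_cv (a : nat -> C) (K r : R) M0 : (0 <= r < 1)%R -> (0 <= K)%R ->
  (forall n, (M0 <= n)%nat -> (Cmod (a n) <= K * r ^ n)%R) -> cv (sumC a) (limC (sumC a)).
Proof.
  intros Hr HK H. apply cauchy_cv.
  assert (key : forall n k, (M0 <= n)%nat -> (Cmod (sumC a (n + k) - sumC a n) <= K * r ^ n / (1 - r))%R).
  { intros n k Hn. rewrite sumC_add. replace (sumC a n + sumC (fun j => a (n + j)%nat) k - sumC a n) with (sumC (fun j => a (n + j)%nat) k) by ring.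
    eapply Rle_trans. apply Cmod_sumC_le with (g := fun j => (K * r ^ n * r ^ j)%R).
    { intros j _. rewrite Rmult_assoc, <- pow_add. apply H. lia. }
    rewrite RS_scal. unfold Rdiv. apply Rmult_le_compat_l. apply Rmult_le_pos; auto. apply pow_le; lra.
    apply geo_sum; auto. }
  intros eps He.
  destruct (Req_dec K 0) as [E|NE].
  - exists M0. intros n m Hn Hm. destruct (le_lt_dec n m).
    + replace m with (n + (m - n))%nat by lia. rewrite Cmod_sub_sym. eapply Rle_lt_trans; [apply key; auto|]. rewrite E. unfold Rdiv. rewrite !Rmult_0_l. lra.
    + replace n with (m + (n - m))%nat by lia. eapply Rle_lt_trans; [apply key; auto|]. rewrite E. unfold Rdiv. rewrite !Rmult_0_l. lra.
  - destruct (pow_lt_1_zero r ltac:(rewrite Rabs_pos_eq; lra) (eps * (1 - r) / (2 * K))%R) as [M HM].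
    { apply Rdiv_lt_0_compat. apply Rmult_lt_0_compat; lra. lra. }
    assert (Hx : forall n, (M <= n)%nat -> (K * r ^ n / (1 - r) < eps)%R).
    { intros n Hn. specialize (HM n Hn). rewrite Rabs_pos_eq in HM by (apply pow_le; lra).
      apply (Rmult_lt_compat_l (K / (1 - r))) in HM; [|apply Rdiv_lt_0_compat; lra].
      replace (K / (1 - r) * (eps * (1 - r) / (2 * K)))%R with (eps / 2)%R in HM by (field; lra).
      replace (K * r ^ n / (1 - r))%R with (K / (1 - r) * r ^ n)%R by (field; lra). lra. }
    exists (M0 + M)%nat. intros n m Hn Hm. destruct (le_lt_dec n m).
    + replace m with (n + (m - n))%nat by lia. rewrite Cmod_sub_sym. eapply Rle_lt_trans; [apply key; lia|]. apply Hx; lia.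
    + replace n with (m + (n - m))%nat by lia. eapply Rle_lt_trans; [apply key; lia|]. apply Hx; lia.
Qed.

Lemma Cpow_mult (a b : C) n : Cpow (a * b) n = Cpow a n * Cpow b n.
Proof. induction n; simpl. ring. rewrite IHn. ring. Qed.

Lemma Cpow_Cpow (a : C) m n : Cpow (Cpow a m) n = Cpow a (m * n).
Proof. induction n; simpl. rewrite Nat.mul_0_r. reflexivity. rewrite IHn. replace (m * S n)%nat with (m + m * n)%nat by lia. rewrite Cpow_add. reflexivity. Qed.

Lemma Cpow_comm_exp (a : C) m n : Cpow (Cpow a m) n = Cpow (Cpow a n) m.
Proof. rewrite !Cpow_Cpow, Nat.mul_comm. reflexivity. Qed.

Section Rep.
Variable q : C.
Hypothesis Hq0 : q <> 0.
Hypothesis Hq1 : (Cmod q < 1)%R.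

Lemma qgen_q : qgen q q.
Proof.
  intros n E. assert (H : q * Cpow q n = 1).
  { transitivity (1 - (1 - q * Cpow q n)). ring. rewrite E. ring. }
  apply (f_equal Cmod) in H. rewrite Cmod_mult, Cmod_pow, Cmod_1 in H.
  assert (Cmod q ^ n <= 1)%R by (apply pow_le_one; split; [apply Cmod_ge_0|lra]).
  pose proof (Cmod_ge_0 q). pose proof (pow_le (Cmod q) n (Cmod_ge_0 q)). nra.
Qed.

Lemma qpoch_nz a n : qgen q a -> qpoch q a n <> 0.
Proof. intros H. unfold qpoch. apply prodC_nz. intros; apply H. Qed.

Variables A1 A2 A3 B1 B2 : C.
Hypothesis gA1 : qgen q A1.
Hypothesis gA2 : qgen q A2.
Hypothesis gA3 : qgen q A3.
Hypothesis gB1 : qgen q B1.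
Hypothesis gB2 : qgen q B2.

Definition Rt (n : nat) : C :=
  qpoch_inf q (q * Cpow q n) * qpoch_inf q (B1 * Cpow q n) * qpoch_inf q (B2 * Cpow q n)
  / (qpoch_inf q (A1 * Cpow q n) * qpoch_inf q (A2 * Cpow q n) * qpoch_inf q (A3 * Cpow q n)).

Definition pref : C :=
  qpoch_inf q q * qpoch_inf q B1 * qpoch_inf q B2 / (qpoch_inf q A1 * qpoch_inf q A2 * qpoch_inf q A3).

Lemma qinf_geo_nz a n : qgen q a -> qpoch_inf q (a * Cpow q n) <> 0.
Proof. intros H. apply qinf_nz; auto. intros k. rewrite <- Cmult_assoc, <- Cpow_add. apply H. Qed.

Lemma pref_term (z : C) n :
  pref * (qpoch q A1 n * qpoch q A2 n * qpoch q A3 n / (qpoch q q n * qpoch q B1 n * qpoch q B2 n) * Cpow z n)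
  = Rt n * Cpow z n.
Proof.
  unfold pref, Rt.
  rewrite (qinf_shift q Hq1 q n), (qinf_shift q Hq1 B1 n), (qinf_shift q Hq1 B2 n),
          (qinf_shift q Hq1 A1 n), (qinf_shift q Hq1 A2 n), (qinf_shift q Hq1 A3 n).
  pose proof (qpoch_nz q n qgen_q). pose proof (qpoch_nz A1 n gA1). pose proof (qpoch_nz A2 n gA2).
  pose proof (qpoch_nz A3 n gA3). pose proof (qpoch_nz B1 n gB1). pose proof (qpoch_nz B2 n gB2).
  pose proof (qinf_geo_nz A1 n gA1). pose proof (qinf_geo_nz A2 n gA2). pose proof (qinf_geo_nz A3 n gA3).
  field. repeat split; auto.
Qed.

Lemma Rt_cv : cv Rt 1.
Proof.
  unfold Rt. replace (RtoC 1) with (1 * 1 * 1 / (1 * 1 * 1)) by (field; apply C1_nz).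
  apply cv_div. rewrite !Cmult_1_l. apply C1_nz.
  - repeat apply cv_mult; apply qinf_geo_cv; auto.
  - repeat apply cv_mult; apply qinf_geo_cv; auto.
Qed.

Lemma pref_nz : pref <> 0.
Proof.
  unfold pref. pose proof (qinf_nz q Hq1 q qgen_q). pose proof (qinf_nz q Hq1 B1 gB1).
  pose proof (qinf_nz q Hq1 B2 gB2). pose proof (qinf_nz q Hq1 A1 gA1). pose proof (qinf_nz q Hq1 A2 gA2).
  pose proof (qinf_nz q Hq1 A3 gA3).
  unfold Cdiv. repeat apply Cmult_neq_0; auto. apply Cinv_nz. repeat apply Cmult_neq_0; auto.
Qed.

Lemma Rt_series_cv (z : C) : (Cmod z < 1)%R ->
  cv (sumC (fun n => Rt n * Cpow z n)) (limC (sumC (fun n => Rt n * Cpow z n))).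
Proof.
  intros Hz. destruct (Rt_cv 1%R ltac:(lra)) as [M HM].
  apply series_cv with (K := 2%R) (r := Cmod z) (M0 := M). split; [apply Cmod_ge_0|lra]. lra.
  intros n Hn. rewrite Cmod_mult, Cmod_pow. specialize (HM n Hn).
  assert (Cmod (Rt n) <= 2)%R.
  { replace (Rt n) with ((Rt n - 1) + 1) by ring. eapply Rle_trans; [apply Cmod_triangle|]. rewrite Cmod_1. lra. }
  apply Rmult_le_compat_r; auto. apply pow_le, Cmod_ge_0.
Qed.

Lemma phi32_rep (z : C) : (Cmod z < 1)%R ->
  pref * phi32 q A1 A2 A3 B1 B2 z = limC (sumC (fun n => Rt n * Cpow z n)).
Proof.
  intros Hz. unfold phi32.
  set (L := limC (sumC (fun n => Rt n * Cpow z n))).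
  assert (Hcv := Rt_series_cv z Hz). fold L in Hcv.
  rewrite (cv_limC _ (/ pref * L)).
  - field. apply pref_nz.
  - eapply cv_ext. 2: apply (cv_scal (/ pref) _ _ Hcv).
    intros M. simpl. rewrite <- sumC_scal. apply sumC_ext. intros k _.
    rewrite <- pref_term. field. repeat split; try apply qpoch_nz; auto. apply qgen_q. apply pref_nz.
Qed.

Definition Pw (c : nat -> C) (N : nat) (s : C) : C := sumC (fun k => Cpow s (S k) * c k) (S N).

Definition Wsum (c : nat -> C) (N : nat) (w : C) (M : nat) : C :=
  sumC (fun n => Rt n * Pw c N (w * Cpow q n)) M.

Lemma gshape_rep (ypow : C) (c : nat -> C) (N : nat) (w : C) :
  cv (Wsum c N w) (limC (Wsum c N w)) /\
  gshape q ypow c N w A1 A2 A3 B1 B2 = (1 - q) * ypow * limC (Wsum c N w).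
Proof.
  set (V k := limC (sumC (fun n => Rt n * Cpow (Cpow q (S k)) n))).
  assert (HV : forall k, cv (sumC (fun n => Rt n * Cpow (Cpow q (S k)) n)) (V k)).
  { intros k. apply Rt_series_cv. rewrite Cmod_pow. simpl.
    assert (Cmod q ^ k <= 1)%R by (apply pow_le_one; split; [apply Cmod_ge_0|lra]).
    pose proof (Cmod_ge_0 q). nra. }
  assert (HW : cv (Wsum c N w) (sumC (fun k => Cpow w (S k) * c k * V k) (S N))).
  { eapply cv_ext. 2: { apply cv_sumC with (f := fun M k => Cpow w (S k) * c k * sumC (fun n => Rt n * Cpow (Cpow q (S k)) n) M).
      intros k _. apply cv_scal. apply HV. }
    intros M. cbv beta. unfold Wsum, Pw.
    transitivity (sumC (fun k => sumC (fun n => Cpow w (S k) * c k * (Rt n * Cpow (Cpow q (S k)) n)) M) (S N)).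
    - apply sumC_ext. intros k _. rewrite sumC_scal. reflexivity.
    - rewrite <- sumC_swap. apply sumC_ext. intros n _. rewrite <- sumC_scal. apply sumC_ext. intros k _.
      rewrite Cpow_mult, Cpow_comm_exp. ring. }
  split.
  - rewrite (cv_limC _ _ HW). exact HW.
  - rewrite (cv_limC _ _ HW). unfold gshape.
    replace ((1 - q) * ypow * (qpoch_inf q q * qpoch_inf q B1 * qpoch_inf q B2) /
     (qpoch_inf q A1 * qpoch_inf q A2 * qpoch_inf q A3)) with ((1 - q) * ypow * pref).
    2: { unfold pref. unfold Cdiv. ring. }
    rewrite <- Cmult_assoc. f_equal. rewrite <- sumC_scal. apply sumC_ext. intros k _.
    unfold V. rewrite <- phi32_rep. ring.
    rewrite Cmod_pow. simpl.
    assert (Cmod q ^ k <= 1)%R by (apply pow_le_one; split; [apply Cmod_ge_0|lra]).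
    pose proof (Cmod_ge_0 q). nra.
Qed.

End Rep.

Section Kern.
Variables (Q x r A B a b ap bp E0 : C).
Hypotheses (HQ : Q <> 0) (Hx : x <> 0) (Hr : r <> 0) (Ha : a <> 0) (Hb : b <> 0) (Hap : ap <> 0) (Hbp : bp <> 0).

Definition Uf (s : C) : C := (1 - s / ap) * (1 - s / bp).
Definition Vf (s : C) : C := (1 - r * s / a) * (1 - r * s / b).
Definition k1 : C := A * a * b / r.
Definition km : C := B * Q * ap * bp.
Definition cc1 : C := A * (x - a) * (x - b) / x.
Definition cc2 : C := B * (x - ap) * (x - bp) / x.
Definition DD : C := (A + B) * x + (k1 + B * r * ap * bp) / x.
Definition ee : C := A + B * r / Q.

Lemma kernel (s X Xp Xm p0 pQ pq : C) :
  Xp * (1 - r * s / x) = X * (1 - s / x) ->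
  Xm * (1 - s / (Q * x)) = (1 - r * s / (Q * x)) * X ->
  km * Vf s * pQ + k1 * Uf (s / Q) * pq - (k1 + km + ee * s * s) * p0 = E0 * s * p0 ->
  cc1 * s * Xp * p0 + cc2 * s * Xm * p0 - (DD + E0) * s * X * p0
  = Vf s * (k1 * p0 * Xp - km * pQ * X) - Uf (s / Q) * (k1 * pq * X - km * p0 * Xm).
Proof.
  intros H1 H2 H3.
  apply Ceq_minus.
  set (W1 := A * (s * x - a * b / r)). set (W2 := B * (s * x - Q * ap * bp)).
  transitivity (p0 * W1 * (Xp * (1 - r * s / x) - X * (1 - s / x))
     + p0 * W2 * (Xm * (1 - s / (Q * x)) - (1 - r * s / (Q * x)) * X)
     + X * (km * Vf s * pQ + k1 * Uf (s / Q) * pq - (k1 + km + ee * s * s) * p0 - E0 * s * p0)).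
  - unfold W1, W2, Uf, Vf, DD, k1, km, cc1, cc2, ee. field. repeat split; auto.
  - rewrite H1, H2, H3. ring.
Qed.

Section Tele.
Variables (p : C -> C) (s T X Xp Xm : nat -> C).
Hypotheses (hs : forall n, s (S n) = Q * s n)
  (hT : forall n, Uf (s n) * T (S n) = Vf (s n) * T n)
  (hXp : forall n, Xp n = X (S n))
  (hXm : forall n, Xm (S n) = X n)
  (HX1 : forall n, Xp n * (1 - r * s n / x) = X n * (1 - s n / x))
  (HX2 : forall n, Xm n * (1 - s n / (Q * x)) = (1 - r * s n / (Q * x)) * X n)
  (Hp : forall n, km * Vf (s n) * p (Q * s n) + k1 * Uf (s n / Q) * p (s n / Q)
                  - (k1 + km + ee * s n * s n) * p (s n) = E0 * s n * p (s n)).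

Definition term (n : nat) : C :=
  cc1 * (s n * T n * Xp n * p (s n)) + cc2 * (s n * T n * Xm n * p (s n))
  - (DD + E0) * (s n * T n * X n * p (s n)).
Definition JJ (n : nat) : C := Uf (s n / Q) * T n * (k1 * p (s n / Q) * X n - km * p (s n) * Xm n).

Lemma term_tele n : term n = JJ (S n) - JJ n.
Proof.
  unfold term, JJ.
  rewrite hs. replace (Q * s n / Q) with (s n) by (field; auto).
  rewrite hXm, <- hXp.
  replace (Uf (s n) * T (S n) * (k1 * p (s n) * Xp n - km * p (Q * s n) * X n))
    with (Vf (s n) * T n * (k1 * p (s n) * Xp n - km * p (Q * s n) * X n))
    by (rewrite <- hT; ring).
  pose proof (kernel (s n) (X n) (Xp n) (Xm n) (p (s n)) (p (Q * s n)) (p (s n / Q)) (HX1 n) (HX2 n) (Hp n)) as K.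
  transitivity (T n * (cc1 * s n * Xp n * p (s n) + cc2 * s n * Xm n * p (s n) - (DD + E0) * s n * X n * p (s n))).
  ring. rewrite K. ring.
Qed.

Lemma sum_tele m : sumC term m = JJ m - JJ 0.
Proof. induction m; simpl. ring. rewrite IHm, term_tele. ring. Qed.
End Tele.
End Kern.

Fixpoint cs (xf yf zf : nat -> C) (E : C) (n : nat) : C * C :=
  match n with
  | O => (RtoC 0, RtoC 1)
  | S m => let (a, b) := cs xf yf zf E m in
           (b, (b * (E + yf (S m)) - a * zf (S m)) / xf (S m))
  end.

Lemma cseq_cs qp t1 t2 N h1 h2 l1 l2 a1 a2 lam1 E n :
  cseq qp t1 t2 N h1 h2 l1 l2 a1 a2 lam1 E n =
  cs (xn qp t1 t2 N h1 h2 a1 lam1) (yn qp t1 t2 N h1 h2 l1 l2 a1 a2 lam1)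
     (zn qp N a1 a2 lam1) E n.
Proof. induction n; simpl. reflexivity. rewrite IHn. reflexivity. Qed.

Lemma cs_fst (xf yf zf : nat -> C) E m : fst (cs xf yf zf E (S m)) = snd (cs xf yf zf E m).
Proof. simpl. destruct (cs xf yf zf E m). reflexivity. Qed.

Lemma cs_snd (xf yf zf : nat -> C) E m : xf (S m) <> 0 ->
  snd (cs xf yf zf E (S m)) * xf (S m) =
  snd (cs xf yf zf E m) * (E + yf (S m)) - fst (cs xf yf zf E m) * zf (S m).
Proof. intros H. simpl. destruct (cs xf yf zf E m). simpl. field. auto. Qed.

Section Poly.
Variables (Q r A B a b ap bp E : C).
Hypotheses (HQ : Q <> 0) (Hr : r <> 0) (Ha : a <> 0) (Hb : b <> 0) (Hap : ap <> 0) (Hbp : bp <> 0).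
Variables (xf yf zf : nat -> C) (N : nat).
Let kk1 := k1 r A a b.
Let kkm := km Q B ap bp.
Let e := ee Q r A B.
Hypothesis Hx : forall k, xf k = kk1 * (/ Cpow Q k - 1) + kkm * (Cpow Q k - 1).
Hypothesis Hy : forall k, yf (S k) = kkm * r * (/ a + / b) * Cpow Q k + kk1 * (/ ap + / bp) / Cpow Q (S k).
Hypothesis Hz : forall k, zf (S (S k)) = kkm * r * r * Cpow Q k / (a * b) + kk1 / (Cpow Q (S (S k)) * ap * bp) - e.
Hypothesis Hnz : forall j, (1 <= j <= N)%nat -> xf j <> 0.
Hypothesis HcE : snd (cs xf yf zf E N) * (E + yf (S N)) - fst (cs xf yf zf E N) * zf (S N) = 0.
Hypothesis Hz0 : zf (S (S N)) = 0.

Let c k := snd (cs xf yf zf E k).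
Definition pp (s : C) : C := sumC (fun k => Cpow s k * c k) (S N).

Lemma CpowQ_nz k : Cpow Q k <> 0.
Proof. induction k; simpl. apply C1_nz. apply Cmult_neq_0; auto. Qed.

Lemma poly_step (s : C) k :
  kkm * Vf r a b s * Cpow (Q * s) k + kk1 * Uf ap bp (s / Q) * Cpow (s / Q) k
  - (kk1 + kkm + e * s * s) * Cpow s k - E * s * Cpow s k
  = Cpow s k * (xf k - (E + yf (S k)) * s + zf (S (S k)) * s * s).
Proof.
  rewrite Hx, Hy, Hz. rewrite Cpow_mult.
  assert (H : Cpow (s / Q) k = Cpow s k / Cpow Q k).
  { unfold Cdiv. rewrite Cpow_mult. f_equal. clear -HQ. induction k; simpl. { field. }
    rewrite IHk. field. split; auto. apply CpowQ_nz. }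
  rewrite H. pose proof (CpowQ_nz k). simpl.
  unfold kkm, kk1, e, k1, km, ee, Uf, Vf. field. repeat split; auto.
Qed.

Lemma poly_sum M : (M <= N)%nat -> forall s,
  sumC (fun k => c k * (Cpow s k * (xf k - (E + yf (S k)) * s + zf (S (S k)) * s * s))) (S M)
  = Cpow s (S M) * (fst (cs xf yf zf E M) * zf (S M) - c M * (E + yf (S M)))
    + Cpow s (S (S M)) * c M * zf (S (S M)).
Proof.
  induction M; intros HM s.
  - simpl. unfold c; simpl. rewrite Hx. simpl. field.
  - change (sumC (fun k => c k * (Cpow s k * (xf k - (E + yf (S k)) * s + zf (S (S k)) * s * s))) (S (S M)))
      with (sumC (fun k => c k * (Cpow s k * (xf k - (E + yf (S k)) * s + zf (S (S k)) * s * s))) (S M)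
            + c (S M) * (Cpow s (S M) * (xf (S M) - (E + yf (S (S M))) * s + zf (S (S (S M))) * s * s))).
    rewrite IHM by lia.
    rewrite cs_fst. fold (c M).
    assert (Hrec := cs_snd xf yf zf E M (Hnz (S M) ltac:(lia))). fold (c (S M)) in Hrec. fold (c M) in Hrec.
    transitivity (Cpow s (S M) * (fst (cs xf yf zf E M) * zf (S M) - c M * (E + yf (S M)) + c (S M) * xf (S M))
      + Cpow s (S (S M)) * (c M * zf (S (S M)) - c (S M) * (E + yf (S (S M))))
      + Cpow s (S (S (S M))) * c (S M) * zf (S (S (S M)))).
    + simpl. ring.
    + rewrite Hrec. simpl. ring.
Qed.

Lemma poly_eq (s : C) :
  kkm * Vf r a b s * pp (Q * s) + kk1 * Uf ap bp (s / Q) * pp (s / Q) - (kk1 + kkm + e * s * s) * pp s = E * s * pp s.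
Proof.
  apply Ceq_minus. unfold pp.
  transitivity (sumC (fun k => c k * (kkm * Vf r a b s * Cpow (Q * s) k + kk1 * Uf ap bp (s / Q) * Cpow (s / Q) k
    - (kk1 + kkm + e * s * s) * Cpow s k - E * s * Cpow s k)) (S N)).
  - set (F1 := fun k => Cpow (Q * s) k). set (F2 := fun k => Cpow (s / Q) k). set (F3 := fun k => Cpow s k).
    change (kkm * Vf r a b s * sumC (fun k => F1 k * c k) (S N) + kk1 * Uf ap bp (s / Q) * sumC (fun k => F2 k * c k) (S N) -
      (kk1 + kkm + e * s * s) * sumC (fun k => F3 k * c k) (S N) - E * s * sumC (fun k => F3 k * c k) (S N) =
      sumC (fun k => c k * (kkm * Vf r a b s * F1 k + kk1 * Uf ap bp (s / Q) * F2 k - (kk1 + kkm + e * s * s) * F3 k - E * s * F3 k)) (S N)).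
    generalize (S N). intros n. induction n; simpl. ring. rewrite <- IHn. ring.
  - transitivity (sumC (fun k => c k * (Cpow s k * (xf k - (E + yf (S k)) * s + zf (S (S k)) * s * s))) (S N)).
    + apply sumC_ext. intros k _. rewrite poly_step. reflexivity.
    + rewrite poly_sum by lia.
      assert (E1 : fst (cs xf yf zf E N) * zf (S N) - c N * (E + yf (S N)) = 0).
      { transitivity (- (snd (cs xf yf zf E N) * (E + yf (S N)) - fst (cs xf yf zf E N) * zf (S N))).
        unfold c; ring. rewrite HcE. ring. }
      rewrite E1, Hz0. ring.
Qed.
End Poly.

Section QPs.
Variables (q : C) (qp : R -> C).
Hypotheses (qp_add : forall u v, qp (u + v)%R = qp u * qp v) (qp_one : qp 1%R = q)
  (qp_nz : forall u, qp u <> 0).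

Lemma qp_zero : qp 0%R = 1.
Proof.
  pose proof (qp_add 0 0) as H. rewrite Rplus_0_r in H.
  pose proof (qp_nz 0%R).
  transitivity (qp 0%R * qp 0%R / qp 0%R). field; auto. rewrite <- H. field; auto.
Qed.

Lemma qp_opp u : qp (- u)%R = / qp u.
Proof.
  pose proof (qp_add u (- u)) as H. rewrite Rplus_opp_r, qp_zero in H.
  pose proof (qp_nz u).
  transitivity (qp u * qp (- u)%R / qp u). field; auto. rewrite <- H. field; auto.
Qed.

Lemma qp_sub u v : qp (u - v)%R = qp u / qp v.
Proof. unfold Rminus. rewrite qp_add, qp_opp. reflexivity. Qed.

Lemma qp_2 u : qp (2 * u)%R = qp u * qp u.
Proof. replace (2 * u)%R with (u + u)%R by ring. apply qp_add. Qed.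

Lemma qp_INR n : Cpow q n = qp (INR n).
Proof. induction n. simpl. rewrite qp_zero. reflexivity. rewrite S_INR, qp_add, qp_one. simpl. rewrite IHn. ring. Qed.

Lemma qp_eq u v : u = v -> qp u = qp v.
Proof. intros ->. reflexivity. Qed.

Lemma q_nz : q <> 0.
Proof. rewrite <- qp_one. apply qp_nz. Qed.

End QPs.

Ltac qsplit qp_add :=
  repeat first
   [ rewrite (qp_add _ _)
   | rewrite (qp_sub _ _ qp_add _ _)
   | rewrite (qp_opp _ _ qp_add _ _)
   | rewrite (qp_2 _ _ qp_add _) ].

Section Main.
Variables (q : C) (qp : R -> C) (t1 t2 : C) (N : nat) (h1 h2 l1 l2 a1 a2 lam1 : R).
Hypotheses (qp_add : forall u v, qp (u + v)%R = qp u * qp v) (qp_one : qp 1%R = q)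
  (qp_nz : forall u, qp u <> 0) (Ht1 : t1 <> 0) (Ht2 : t2 <> 0)
  (Hlam : lam1 = ((h1 + h2 - l1 - l2 - a1 - a2 - (INR N + 1) + 2) / 2)%R).

Let qsub := qp_sub qp qp_add qp_nz.
Let qopp := qp_opp qp qp_add qp_nz.
Let q2 := qp_2 qp qp_add.
Lemma qtwo : qp 2%R = q * q.
Proof. replace 2%R with (1 + 1)%R by ring. rewrite qp_add, qp_one. reflexivity. Qed.
Lemma qINR n : Cpow q n = qp (INR n).
Proof. apply qp_INR; auto. Qed.
Lemma qzero : qp 0%R = 1.
Proof. apply qp_zero; auto. Qed.
Lemma qnz : q <> 0.
Proof. rewrite <- qp_one. apply qp_nz. Qed.

Lemma q_half : q = qp (/2)%R * qp (/2)%R.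
Proof. rewrite <- qp_add, <- qp_one. f_equal. field. Qed.

Lemma Ha2 : a2 = (h1 + h2 - l1 - l2 - a1 - INR N + 1 - 2 * lam1)%R.
Proof. rewrite Hlam. field. Qed.

Lemma q32 : qp (3/2)%R = q * qp (/2)%R.
Proof. rewrite <- qp_one, <- qp_add. apply qp_eq. field. Qed.

Ltac qs := repeat first [ rewrite q32 | rewrite qp_add | rewrite qsub | rewrite qopp | rewrite q2 | rewrite qtwo | rewrite qp_one ]; rewrite ?q_half.
Ltac nzs := repeat split; try apply qp_nz; try apply qnz; auto.

Definition rr := qp (lam1 + a1)%R.
Definition AA := qp a1.
Definition BB := qp a2.
Definition aa := qp (h1 + /2)%R * t1.
Definition bb := qp (h2 + /2)%R * t2.
Definition aap := qp (l1 - /2)%R * t1.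
Definition bbp := qp (l2 - /2)%R * t2.
Definition K1 := k1 rr AA aa bb.
Definition Km := km q BB aap bbp.

Lemma K1_eq : K1 = qp (- lam1 + h1 + h2 + 1)%R * t1 * t2.
Proof. unfold K1, k1, rr, AA, aa, bb. qs. field. nzs. Qed.

Lemma Km_eq : Km = qp (- lam1 + h1 + h2 + 1)%R * qp (- lam1 - a1 - INR N)%R * t1 * t2.
Proof. unfold Km, km, BB, aap, bbp. rewrite Ha2. qs. field. nzs. Qed.


Lemma Hx_id k : xn qp t1 t2 N h1 h2 a1 lam1 k = K1 * (/ Cpow q k - 1) + Km * (Cpow q k - 1).
Proof.
  rewrite K1_eq, Km_eq, qINR. unfold xn. qs. field. nzs.
Qed.

Lemma Hy_id k : yn qp t1 t2 N h1 h2 l1 l2 a1 a2 lam1 (S k) =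
  Km * rr * (/ aa + / bb) * Cpow q k + K1 * (/ aap + / bbp) / Cpow q (S k).
Proof.
  rewrite K1_eq, Km_eq. simpl Cpow. rewrite qINR. unfold yn, rr, aa, bb, aap, bbp. rewrite S_INR, Ha2. qs. field. nzs.
Qed.

Lemma Hz_id k : zn qp N a1 a2 lam1 (S (S k)) =
  Km * rr * rr * Cpow q k / (aa * bb) + K1 / (Cpow q (S (S k)) * aap * bbp) - ee q rr AA BB.
Proof.
  rewrite K1_eq, Km_eq. simpl Cpow. rewrite qINR. unfold zn, rr, aa, bb, aap, bbp, ee, AA, BB. rewrite !S_INR, Ha2. qs. field. nzs.
Qed.

Lemma Hz0_id : zn qp N a1 a2 lam1 (S (S N)) = 0.
Proof.
  unfold zn. rewrite (qp_eq qp (INR N - INR (S (S N)) + 2)%R 0%R) by (rewrite !S_INR; ring).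
  rewrite qzero. ring.
Qed.

Lemma C_id : qp ((h1 + h2 + l1 + l2 + a1 + a2) / 2)%R * (qp ((INR N + 1) / 2)%R + qp (- (INR N + 1) / 2)%R) * t1 * t2
  = K1 + BB * rr * aap * bbp.
Proof.
  rewrite Cmult_plus_distr_l, <- !qp_add.
  rewrite (qp_eq qp ((h1 + h2 + l1 + l2 + a1 + a2) / 2 + (INR N + 1) / 2)%R (- lam1 + h1 + h2 + 1)%R)
    by (rewrite Hlam; field).
  rewrite (qp_eq qp ((h1 + h2 + l1 + l2 + a1 + a2) / 2 + - (INR N + 1) / 2)%R (a2 + (lam1 + a1) + (l1 - /2) + (l2 - /2))%R)
    by (rewrite Hlam; field).
  rewrite K1_eq. unfold BB, rr, aap, bbp. rewrite !qp_add. ring.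
Qed.

Lemma K1Km : K1 - Km = - (qp (- lam1 + h1 + h2 + 1)%R * (qp (- lam1 - a1 - INR N)%R - 1) * t1 * t2).
Proof. rewrite K1_eq, Km_eq. ring. Qed.

Variables (x E0 : C).
Hypotheses (Hx0 : x <> 0) (Hq1 : (Cmod q < 1)%R).
Hypothesis Hnz : forall j, (1 <= j <= N)%nat -> xn qp t1 t2 N h1 h2 a1 lam1 j <> 0.
Hypothesis HcE : snd (cs (xn qp t1 t2 N h1 h2 a1 lam1) (yn qp t1 t2 N h1 h2 l1 l2 a1 a2 lam1) (zn qp N a1 a2 lam1) E0 N)
   * (E0 + yn qp t1 t2 N h1 h2 l1 l2 a1 a2 lam1 (S N))
   - fst (cs (xn qp t1 t2 N h1 h2 a1 lam1) (yn qp t1 t2 N h1 h2 l1 l2 a1 a2 lam1) (zn qp N a1 a2 lam1) E0 N)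
   * zn qp N a1 a2 lam1 (S N) = 0.

Notation qinf := (qpoch_inf q).
Definition Tf (s : C) : C := qinf (s / aap) * qinf (s / bbp) / (qinf (rr * s / aa) * qinf (rr * s / bb)).
Definition Xf (y s : C) : C := qinf (rr * s / y) / qinf (s / y).
Definition PP (s : C) : C := pp E0 (xn qp t1 t2 N h1 h2 a1 lam1) (yn qp t1 t2 N h1 h2 l1 l2 a1 a2 lam1) (zn qp N a1 a2 lam1) N s.

Lemma rr_nz : rr <> 0. Proof. apply qp_nz. Qed.
Lemma aa_nz : aa <> 0. Proof. unfold aa. apply Cmult_neq_0; auto. Qed.
Lemma bb_nz : bb <> 0. Proof. unfold bb. apply Cmult_neq_0; auto. Qed.
Lemma aap_nz : aap <> 0. Proof. unfold aap. apply Cmult_neq_0; auto. Qed.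
Lemma bbp_nz : bbp <> 0. Proof. unfold bbp. apply Cmult_neq_0; auto. Qed.
Lemma AA_nz : AA <> 0. Proof. apply qp_nz. Qed.
Lemma BB_nz : BB <> 0. Proof. apply qp_nz. Qed.
#[local] Hint Resolve rr_nz aa_nz bb_nz aap_nz bbp_nz AA_nz BB_nz qnz qp_nz Hx0 Ht1 Ht2 : nzdb.

Lemma one_minus_div (u v : C) : v <> 0 -> 1 - u / v <> 0 -> v - u <> 0.
Proof. intros Hv H E. apply H. replace u with v. field; auto. symmetry. apply Ceq_minus in E. 
  transitivity (v - (v - u)). ring. rewrite E. ring. Qed.

Lemma Hp_all (s : C) :
  km q BB aap bbp * Vf rr aa bb s * PP (q * s) + k1 rr AA aa bb * Uf aap bbp (s / q) * PP (s / q)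
  - (k1 rr AA aa bb + km q BB aap bbp + ee q rr AA BB * s * s) * PP s = E0 * s * PP s.
Proof.
  unfold PP. apply poly_eq; auto with nzdb.
  - intros k. apply Hx_id.
  - intros k. apply Hy_id.
  - intros k. apply Hz_id.
  - apply Hz0_id.
Qed.

Lemma qinf_split (z : C) : qinf z = (1 - z) * qinf (z * q).
Proof. apply qinf_1; auto. Qed.

Lemma qinf_split_nz (z w : C) : w = z * q -> qinf z <> 0 -> (1 - z) <> 0 /\ qinf w <> 0.
Proof.
  intros -> H. rewrite qinf_split in H. split; intro E; apply H; rewrite E; ring.
Qed.

Lemma hT_lemma (s : C) : qinf (rr * s / aa) <> 0 -> qinf (rr * s / bb) <> 0 ->
  Uf aap bbp s * Tf (q * s) = Vf rr aa bb s * Tf s.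
Proof.
  intros H1 H2.
  assert (E1 : qinf (s / aap) = (1 - s / aap) * qinf (q * s / aap)).
  { rewrite qinf_split. f_equal. f_equal. field. auto with nzdb. }
  assert (E2 : qinf (s / bbp) = (1 - s / bbp) * qinf (q * s / bbp)).
  { rewrite qinf_split. f_equal. f_equal. field. auto with nzdb. }
  assert (E3 : qinf (rr * s / aa) = (1 - rr * s / aa) * qinf (rr * (q * s) / aa)).
  { rewrite qinf_split. f_equal. f_equal. field. auto with nzdb. }
  assert (E4 : qinf (rr * s / bb) = (1 - rr * s / bb) * qinf (rr * (q * s) / bb)).
  { rewrite qinf_split. f_equal. f_equal. field. auto with nzdb. }
  assert (N3 : 1 - rr * s / aa <> 0 /\ qinf (rr * (q * s) / aa) <> 0).
  { rewrite E3 in H1. split; intro E; apply H1; rewrite E; ring. }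
  assert (N4 : 1 - rr * s / bb <> 0 /\ qinf (rr * (q * s) / bb) <> 0).
  { rewrite E4 in H2. split; intro E; apply H2; rewrite E; ring. }
  destruct N3, N4.
  unfold Tf, Uf, Vf. rewrite E1, E2, E3, E4. field. repeat split; auto with nzdb; apply one_minus_div; auto with nzdb.
Qed.

Lemma HX1_lemma (y s : C) : y <> 0 -> qinf (s / y) <> 0 ->
  Xf y (q * s) * (1 - rr * s / y) = Xf y s * (1 - s / y).
Proof.
  intros Hy H.
  assert (E1 : qinf (s / y) = (1 - s / y) * qinf (q * s / y)).
  { rewrite qinf_split. f_equal. f_equal. field. auto. }
  assert (E2 : qinf (rr * s / y) = (1 - rr * s / y) * qinf (rr * (q * s) / y)).
  { rewrite qinf_split. f_equal. f_equal. field. auto. }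
  assert (N1 : 1 - s / y <> 0 /\ qinf (q * s / y) <> 0).
  { rewrite E1 in H. split; intro E; apply H; rewrite E; ring. }
  destruct N1. unfold Xf. rewrite E1, E2. field. repeat split; auto with nzdb; apply one_minus_div; auto with nzdb.
Qed.

Lemma HX2_lemma (y s : C) : y <> 0 -> qinf (s / (q * y)) <> 0 ->
  Xf y (s / q) * (1 - s / (q * y)) = (1 - rr * s / (q * y)) * Xf y s.
Proof.
  intros Hy H.
  assert (E1 : qinf (s / q / y) = (1 - s / (q * y)) * qinf (s / y)).
  { rewrite qinf_split. f_equal. f_equal. field. split; auto with nzdb. f_equal. field. split; auto with nzdb. }
  assert (E2 : qinf (rr * (s / q) / y) = (1 - rr * s / (q * y)) * qinf (rr * s / y)).
  { rewrite qinf_split. f_equal. f_equal. field. split; auto with nzdb. f_equal. field. split; auto with nzdb. }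
  assert (H' : qinf (s / q / y) <> 0).
  { replace (s / q / y) with (s / (q * y)) by (field; split; auto with nzdb). auto. }
  assert (N1 : 1 - s / (q * y) <> 0 /\ qinf (s / y) <> 0).
  { rewrite E1 in H'. split; intro E; apply H'; rewrite E; ring. }
  destruct N1. unfold Xf. rewrite E1, E2. field. repeat split; auto with nzdb; apply one_minus_div; auto with nzdb. all: apply Cmult_neq_0; auto with nzdb.
Qed.

Lemma cv_eq_lim (u : nat -> C) a b : cv u a -> a = b -> cv u b.
Proof. intros H <-. auto. Qed.

Lemma cv_qinf_seq (f : nat -> C) (al : C) : (forall m, f m = al * Cpow q m) -> cv (fun m => qinf (f m)) 1.
Proof. intros H. eapply cv_ext. 2: apply (qinf_geo_cv q Hq1 al). intros m. simpl. rewrite H. reflexivity. Qed.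

Lemma cv_geo (w : C) : cv (fun m => w * Cpow q m) 0.
Proof. replace (RtoC 0) with (w * 0) by ring. apply cv_scal. apply cv_Cpow; auto. Qed.

Lemma cv_Cpow_k (z : nat -> C) : cv z 0 -> forall k, cv (fun m => Cpow (z m) k) (Cpow 0 k).
Proof. intros H k. induction k; simpl. apply cv_const. apply cv_mult; auto. Qed.

Lemma sum_Cpow0 (c : nat -> C) n : sumC (fun k => Cpow 0 k * c k) (S n) = c 0%nat.
Proof. induction n. simpl. ring. change (sumC (fun k => Cpow 0 k * c k) (S (S n))) with
  (sumC (fun k => Cpow 0 k * c k) (S n) + Cpow 0 (S n) * c (S n)). rewrite IHn. simpl. ring. Qed.

Lemma cv_PP (z : nat -> C) : cv z 0 -> cv (fun m => PP (z m)) 1.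
Proof.
  intros H. unfold PP, pp.
  match goal with |- cv _ ?l => replace l with (sumC (fun k => Cpow 0 k * snd (cs (xn qp t1 t2 N h1 h2 a1 lam1) (yn qp t1 t2 N h1 h2 l1 l2 a1 a2 lam1) (zn qp N a1 a2 lam1) E0 k)) (S N)) end.
  - apply cv_sumC with (f := fun m k => Cpow (z m) k * snd (cs (xn qp t1 t2 N h1 h2 a1 lam1) (yn qp t1 t2 N h1 h2 l1 l2 a1 a2 lam1) (zn qp N a1 a2 lam1) E0 k)).
    intros k _. apply cv_mult. apply cv_Cpow_k; auto. apply cv_const.
  - rewrite sum_Cpow0. reflexivity.
Qed.

Lemma cv_Uf (z : nat -> C) : cv z 0 -> cv (fun m => Uf aap bbp (z m)) 1.
Proof.
  intros H. unfold Uf. eapply cv_eq_lim.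
  { apply cv_mult; apply cv_minus; try apply cv_const; unfold Cdiv; apply cv_mult; [exact H| apply cv_const | exact H | apply cv_const]. }
  field; auto with nzdb.
Qed.

Lemma cv_div_geo (w d : C) : d <> 0 -> cv (fun m => qinf (w * Cpow q m / d)) 1.
Proof. intros Hd. apply cv_qinf_seq with (al := w / d). intros m. field. auto. Qed.

Lemma cv_Tf (w : C) : cv (fun m => Tf (w * Cpow q m)) 1.
Proof.
  unfold Tf. eapply cv_eq_lim. apply cv_div. 2: { apply cv_mult; apply cv_div_geo; auto with nzdb. }
  2: { apply cv_mult; [apply cv_qinf_seq with (al := rr * w / aa) | apply cv_qinf_seq with (al := rr * w / bb)]; intros m; field; auto with nzdb. }
  rewrite Cmult_1_l; apply C1_nz. field; apply C1_nz.
Qed.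

Lemma cv_Xf (y w : C) : y <> 0 -> cv (fun m => Xf y (w * Cpow q m)) 1.
Proof.
  intros Hy. unfold Xf. eapply cv_eq_lim. apply cv_div. 2: { apply cv_qinf_seq with (al := rr * w / y); intros m; field; auto. }
  2: { apply cv_div_geo; auto. }
  apply C1_nz. field; apply C1_nz.
Qed.

Lemma cv_JJ (w : C) (X Xm : nat -> C) :
  cv X 1 -> cv Xm 1 ->
  cv (JJ q rr AA BB aa bb aap bbp PP (fun n => w * Cpow q n) (fun n => Tf (w * Cpow q n)) X Xm) (K1 - Km).
Proof.
  intros HX HXm. unfold JJ.
  assert (Hz : cv (fun n => w * Cpow q n / q) 0).
  { eapply cv_eq_lim. unfold Cdiv. apply cv_mult. apply cv_geo. apply cv_const. ring. }
  eapply cv_eq_lim.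
  { apply cv_mult; [apply cv_mult|].
    - apply cv_Uf. exact Hz.
    - apply cv_Tf.
    - apply cv_minus; apply cv_mult; try apply cv_mult; try apply cv_const; eauto.
      + apply cv_PP. exact Hz.
      + apply cv_PP. apply cv_geo. }
  unfold K1, Km. ring.
Qed.

Lemma sumC_lin3 (c1 c2 c3 : C) (f g h : nat -> C) m :
  sumC (fun n => c1 * f n + c2 * g n - c3 * h n) m = c1 * sumC f m + c2 * sumC g m - c3 * sumC h m.
Proof. induction m; simpl. ring. rewrite IHm. ring. Qed.

Definition Wseq (w : C) (X : C -> C) : nat -> C :=
  sumC (fun n => (w * Cpow q n) * Tf (w * Cpow q n) * X (w * Cpow q n) * PP (w * Cpow q n)).

Lemma fixed_grid (w : C) :
  (forall n, qinf (w * Cpow q n / x) <> 0) -> (forall n, qinf (w * Cpow q n / (q * x)) <> 0) ->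
  (forall n, qinf (rr * (w * Cpow q n) / aa) <> 0) -> (forall n, qinf (rr * (w * Cpow q n) / bb) <> 0) ->
  Uf aap bbp (w / q) = 0 ->
  forall L0 L1 L2,
  cv (Wseq w (fun s => Xf x s)) L0 -> cv (Wseq w (fun s => Xf x (q * s))) L1 -> cv (Wseq w (fun s => Xf x (s / q))) L2 ->
  cc1 x AA aa bb * L1 + cc2 x BB aap bbp * L2 - (DD x rr AA BB aa bb aap bbp + E0) * L0 = K1 - Km.
Proof.
  intros G1 G2 G3 G4 HU L0 L1 L2 C0 C1 C2.
  set (s := fun n => w * Cpow q n).
  assert (hs : forall n, s (S n) = q * s n) by (intros; unfold s; simpl; ring).
  pose proof (sum_tele q x rr AA BB aa bb aap bbp E0 qnz Hx0 rr_nz aa_nz bb_nz aap_nz bbp_nz PP s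
     (fun n => Tf (s n)) (fun n => Xf x (s n)) (fun n => Xf x (q * s n)) (fun n => Xf x (s n / q)) hs) as T.
  assert (hT : forall n, Uf aap bbp (s n) * Tf (s (S n)) = Vf rr aa bb (s n) * Tf (s n)).
  { intros n. rewrite hs. apply hT_lemma; [apply G3 | apply G4]. }
  specialize (T hT).
  assert (hXp : forall n, Xf x (q * s n) = Xf x (s (S n))) by (intros; rewrite hs; reflexivity).
  specialize (T hXp).
  assert (hXm : forall n, Xf x (s (S n) / q) = Xf x (s n)).
  { intros; rewrite hs. f_equal. field. auto with nzdb. }
  specialize (T hXm).
  assert (HX1 : forall n, Xf x (q * s n) * (1 - rr * s n / x) = Xf x (s n) * (1 - s n / x)).
  { intros. apply HX1_lemma; [exact Hx0 | apply G1]. }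
  assert (HX2 : forall n, Xf x (s n / q) * (1 - s n / (q * x)) = (1 - rr * s n / (q * x)) * Xf x (s n)).
  { intros. apply HX2_lemma; [exact Hx0 | apply G2]. }
  specialize (T HX1 HX2 (fun n => Hp_all (s n))).
  assert (E : forall m, cc1 x AA aa bb * Wseq w (fun s => Xf x (q * s)) m + cc2 x BB aap bbp * Wseq w (fun s => Xf x (s / q)) m
     - (DD x rr AA BB aa bb aap bbp + E0) * Wseq w (fun s => Xf x s) m
     = JJ q rr AA BB aa bb aap bbp PP s (fun n => Tf (s n)) (fun n => Xf x (s n)) (fun n => Xf x (s n / q)) m
     - JJ q rr AA BB aa bb aap bbp PP s (fun n => Tf (s n)) (fun n => Xf x (s n)) (fun n => Xf x (s n / q)) 0).
  { intros m. rewrite <- T. unfold Wseq. rewrite <- sumC_lin3. reflexivity. }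
  assert (J0 : JJ q rr AA BB aa bb aap bbp PP s (fun n => Tf (s n)) (fun n => Xf x (s n)) (fun n => Xf x (s n / q)) 0 = 0).
  { unfold JJ, s. simpl Cpow. rewrite Cmult_1_r, HU. ring. }
  apply (cv_unique (fun m => cc1 x AA aa bb * Wseq w (fun s => Xf x (q * s)) m + cc2 x BB aap bbp * Wseq w (fun s => Xf x (s / q)) m
     - (DD x rr AA BB aa bb aap bbp + E0) * Wseq w (fun s => Xf x s) m)).
  - apply cv_minus; [apply cv_plus|]; apply cv_scal; auto.
  - eapply cv_ext. { intros m. symmetry. apply E. }
    rewrite J0. eapply cv_eq_lim. apply cv_minus. 2: apply cv_const.
    apply cv_JJ.
    + apply cv_Xf; auto.
    + eapply cv_ext. 2: apply (cv_Xf x (w / q) Hx0). intros n. simpl. unfold s. f_equal. field. auto with nzdb.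
    + ring.
Qed.

Lemma cc1_V (s : C) : cc1 x AA aa bb * s - k1 rr AA aa bb * Vf rr aa bb s = (1 - rr * s / x) * (AA * (s * x - aa * bb / rr)).
Proof. unfold cc1, k1, Vf. field. repeat split; auto with nzdb. Qed.

Lemma qinf_one : qinf 1 = 0.
Proof. rewrite qinf_split. ring. Qed.

Lemma sumC_shift1 (f : nat -> C) m : sumC f (S m) = f 0%nat + sumC (fun n => f (S n)) m.
Proof. induction m. simpl. ring. change (sumC f (S (S m)) = f 0%nat + (sumC (fun n => f (S n)) m + f (S m))).
  change (sumC f (S (S m))) with (sumC f (S m) + f (S m)). rewrite IHm. ring. Qed.

Lemma moving_grid :
  let w := qp (- lam1 - a1 + 1)%R * x in
  (forall n, qinf (w * Cpow q n / x) <> 0) ->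
  (forall n, qinf (rr * (w * Cpow q n) / aa) <> 0) -> (forall n, qinf (rr * (w * Cpow q n) / bb) <> 0) ->
  qinf (rr * (w / q) / aa) <> 0 -> qinf (rr * (w / q) / bb) <> 0 ->
  forall L0 L1 L2,
  cv (Wseq w (fun s => Xf x s)) L0 ->
  cv (sumC (fun n => (w * Cpow q n / q) * Tf (w * Cpow q n / q) * Xf x (w * Cpow q n) * PP (w * Cpow q n / q))) L1 ->
  cv (sumC (fun n => (q * (w * Cpow q n)) * Tf (q * (w * Cpow q n)) * Xf x (w * Cpow q n) * PP (q * (w * Cpow q n)))) L2 ->
  cc1 x AA aa bb * L1 + cc2 x BB aap bbp * L2 - (DD x rr AA BB aa bb aap bbp + E0) * L0 = K1 - Km.
Proof.
  intros w G1 G3 G4 G5 G6 L0 L1 L2 C0 C1 C2.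
  assert (Hw : rr * w / x = q).
  { replace (rr * w / x) with (qp (lam1 + a1)%R * qp (- lam1 - a1 + 1)%R) by (unfold w, rr; field; auto).
    rewrite <- qp_add. rewrite (qp_eq qp _ 1%R) by ring. apply qp_one. }
  set (s := fun n => w * Cpow q n).
  assert (hs : forall n, s (S n) = q * s n) by (intros; unfold s; simpl; ring).
  pose proof (sum_tele q x rr AA BB aa bb aap bbp E0 qnz Hx0 rr_nz aa_nz bb_nz aap_nz bbp_nz PP s
     (fun n => Tf (s n)) (fun n => Xf x (s n)) (fun n => Xf x (q * s n)) (fun n => Xf x (s n / q)) hs) as T.
  assert (hT : forall n, Uf aap bbp (s n) * Tf (s (S n)) = Vf rr aa bb (s n) * Tf (s n)).
  { intros n. rewrite hs. apply hT_lemma; [apply G3 | apply G4]. }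
  specialize (T hT).
  assert (hXp : forall n, Xf x (q * s n) = Xf x (s (S n))) by (intros; rewrite hs; reflexivity).
  specialize (T hXp).
  assert (hXm : forall n, Xf x (s (S n) / q) = Xf x (s n)).
  { intros; rewrite hs. f_equal. field. auto with nzdb. }
  specialize (T hXm).
  assert (HX1 : forall n, Xf x (q * s n) * (1 - rr * s n / x) = Xf x (s n) * (1 - s n / x)).
  { intros. apply HX1_lemma; [exact Hx0 | apply G1]. }
  assert (Xm0 : Xf x (s 0%nat / q) = 0).
  { unfold Xf, s. simpl Cpow. replace (rr * (w * 1 / q) / x) with (RtoC 1).
    rewrite qinf_one. unfold Cdiv. ring.
    transitivity (rr * w / x / q). rewrite Hw. field. auto with nzdb. field. auto with nzdb. }
  assert (HX2 : forall n, Xf x (s n / q) * (1 - s n / (q * x)) = (1 - rr * s n / (q * x)) * Xf x (s n)).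
  { intros [|n].
    - rewrite Xm0. replace (rr * s 0%nat / (q * x)) with (RtoC 1). ring.
      unfold s. simpl Cpow. transitivity (rr * w / x / q). rewrite Hw. field. auto with nzdb. field. auto with nzdb.
    - apply HX2_lemma. exact Hx0. replace (s (S n) / (q * x)) with (w * Cpow q n / x). apply G1.
      unfold s. simpl Cpow. field. auto with nzdb. }
  specialize (T HX1 HX2 (fun n => Hp_all (s n))).
  set (JJs := JJ q rr AA BB aa bb aap bbp PP s (fun n => Tf (s n)) (fun n => Xf x (s n)) (fun n => Xf x (s n / q))) in T.
  set (G := fun n => s n * Tf (s n) * Xf x (s n / q) * PP (s n)).
  set (plus1 := (w / q) * Tf (w / q) * Xf x w * PP (w / q)).
  assert (E1 : forall m, sumC (fun n => (w * Cpow q n / q) * Tf (w * Cpow q n / q) * Xf x (w * Cpow q n) * PP (w * Cpow q n / q)) (S m)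
     = plus1 + sumC (fun n => s n * Tf (s n) * Xf x (q * s n) * PP (s n)) m).
  { intros m. rewrite sumC_shift1. f_equal.
    - unfold plus1. simpl Cpow. rewrite !Cmult_1_r. reflexivity.
    - apply sumC_ext. intros n _. fold (s (S n)). rewrite hs.
      replace (q * s n / q) with (s n) by (field; auto with nzdb). reflexivity. }
  assert (E2 : forall m, sumC (fun n => (q * (w * Cpow q n)) * Tf (q * (w * Cpow q n)) * Xf x (w * Cpow q n) * PP (q * (w * Cpow q n))) m
     = sumC G m + G m).
  { intros m. assert (G0 : G 0%nat = 0) by (unfold G; rewrite Xm0; ring).
    transitivity (sumC G (S m) - G 0%nat).
    - rewrite sumC_shift1. rewrite G0. rewrite Cplus_0_l. unfold Cminus. rewrite Copp_0, Cplus_0_r.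
      apply sumC_ext. intros n _. unfold G. rewrite hs. fold (s n).
      replace (q * s n / q) with (s n) by (field; auto with nzdb). reflexivity.
    - simpl. rewrite G0. ring. }
  assert (HJ0 : JJs 0%nat = cc1 x AA aa bb * plus1).
  { unfold JJs, JJ. cbv beta. rewrite Xm0. change (s 0%nat / q) with (w * 1 / q). unfold plus1.
    replace (w * 1 / q) with (w / q) by (field; auto with nzdb).
    replace (s 0%nat) with (q * (w / q)) by (unfold s; simpl; field; auto with nzdb).
    pose proof (hT_lemma (w / q) G5 G6) as HT.
    replace (q * (w / q)) with w in * by (field; auto with nzdb).
    rewrite HT. pose proof (cc1_V (w / q)) as HV.
    replace (rr * (w / q) / x) with (RtoC 1) in HV by (transitivity (rr * w / x / q); [rewrite Hw; field; auto with nzdb | field; auto with nzdb]).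
    replace (cc1 x AA aa bb * (w / q * Tf (w / q) * Xf x w * PP (w / q)))
      with ((cc1 x AA aa bb * (w / q)) * Tf (w / q) * Xf x w * PP (w / q)) by ring.
    assert (HV' : cc1 x AA aa bb * (w / q) = k1 rr AA aa bb * Vf rr aa bb (w / q)) by (apply Ceq_minus; rewrite HV; ring).
    rewrite HV'. ring. }
  assert (E : forall m, cc1 x AA aa bb * sumC (fun n => (w * Cpow q n / q) * Tf (w * Cpow q n / q) * Xf x (w * Cpow q n) * PP (w * Cpow q n / q)) (S m)
     + cc2 x BB aap bbp * sumC (fun n => (q * (w * Cpow q n)) * Tf (q * (w * Cpow q n)) * Xf x (w * Cpow q n) * PP (q * (w * Cpow q n))) m
     - (DD x rr AA BB aa bb aap bbp + E0) * Wseq w (fun s => Xf x s) m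
     = JJs m + cc2 x BB aap bbp * G m).
  { intros m. rewrite E1, E2.
    replace (JJs m) with ((JJs m - JJs 0%nat) + JJs 0%nat) by ring. rewrite <- T, HJ0.
    assert (W0eq : Wseq w (fun s => Xf x s) m = sumC (fun n => s n * Tf (s n) * Xf x (s n) * PP (s n)) m) by reflexivity.
    assert (Teq : sumC (term x rr AA BB aa bb aap bbp E0 PP s (fun n => Tf (s n)) (fun n => Xf x (s n))
        (fun n => Xf x (q * s n)) (fun n => Xf x (s n / q))) m
      = cc1 x AA aa bb * sumC (fun n => s n * Tf (s n) * Xf x (q * s n) * PP (s n)) m
        + cc2 x BB aap bbp * sumC G m - (DD x rr AA BB aa bb aap bbp + E0) * sumC (fun n => s n * Tf (s n) * Xf x (s n) * PP (s n)) m).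
    { rewrite <- sumC_lin3. reflexivity. }
    rewrite W0eq, Teq. ring. }
  apply (cv_unique (fun m => cc1 x AA aa bb * sumC (fun n => (w * Cpow q n / q) * Tf (w * Cpow q n / q) * Xf x (w * Cpow q n) * PP (w * Cpow q n / q)) (S m)
     + cc2 x BB aap bbp * sumC (fun n => (q * (w * Cpow q n)) * Tf (q * (w * Cpow q n)) * Xf x (w * Cpow q n) * PP (q * (w * Cpow q n))) m
     - (DD x rr AA BB aa bb aap bbp + E0) * Wseq w (fun s => Xf x s) m)).
  - apply cv_minus; [apply cv_plus|]; apply cv_scal; auto. apply (cv_shift _ _ C1).
  - eapply cv_ext. { intros m. symmetry. apply E. }
    eapply cv_eq_lim. apply cv_plus.
    + apply cv_JJ.
      * apply cv_Xf; auto.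
      * eapply cv_ext. 2: apply (cv_Xf x (w / q) Hx0). intros n. simpl. unfold s. f_equal. field. auto with nzdb.
    + apply cv_scal. unfold G.
      eapply cv_eq_lim. apply cv_mult; [apply cv_mult; [apply cv_mult|]|].
      * apply cv_geo.
      * apply cv_Tf.
      * eapply cv_ext. 2: apply (cv_Xf x (w / q) Hx0). intros n. simpl. unfold s. f_equal. field. auto with nzdb.
      * apply cv_PP. apply cv_geo.
      * reflexivity.
    + ring.
Qed.

Variable xp : R -> C -> C.
Hypothesis Hxp : forall y : C, y <> 0 -> xp (- a1)%R (q * y) = qp (- a1)%R * xp (- a1)%R y.

Lemma final_identity (g : C -> C) (L0 L1 L2 : C) :
  g x = (1 - q) * xp (- a1)%R x * L0 ->
  g (x / q) = (1 - q) * xp (- a1)%R (x / q) * L1 ->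
  g (q * x) = (1 - q) * xp (- a1)%R (q * x) * L2 ->
  cc1 x AA aa bb * L1 + cc2 x BB aap bbp * L2 - (DD x rr AA BB aa bb aap bbp + E0) * L0 = K1 - Km ->
  A4 q qp t1 t2 h1 h2 l1 l2 a1 a2 (INR N + 1) g x =
  E0 * g x - (1 - q) * xp (- a1)%R x * qp (- lam1 + h1 + h2 + 1)%R * (qp (- lam1 - a1 - INR N)%R - 1) * t1 * t2.
Proof.
  intros E0' E1 E2 Key.
  assert (X1 : xp (- a1)%R (x / q) = qp a1 * xp (- a1)%R x).
  { pose proof (Hxp (x / q)) as H. replace (q * (x / q)) with x in H by (field; auto with nzdb).
    rewrite H. 2: { unfold Cdiv. apply Cmult_neq_0; auto with nzdb. apply Cinv_nz. auto with nzdb. }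
    rewrite Cmult_assoc, <- qp_add. rewrite (qp_eq qp _ 0%R) by ring. rewrite qzero. ring. }
  pose proof (Hxp x Hx0) as X2.
  unfold A4. rewrite E0', E1, E2, X1, X2.
  replace ((h1 + h2 + l1 + l2 + a1 + a2) / 2)%R with ((h1 + h2 + l1 + l2 + a1 + a2) / 2)%R by reflexivity.
  pose proof C_id as HC.
  assert (HD : (qp a1 + qp a2) * x + qp ((h1 + h2 + l1 + l2 + a1 + a2) / 2)%R *
       (qp ((INR N + 1) / 2)%R + qp (- (INR N + 1) / 2)%R) * t1 * t2 * / x = DD x rr AA BB aa bb aap bbp).
  { unfold DD. change (k1 rr AA aa bb) with K1. rewrite <- HC. unfold AA, BB. field. auto. }
  rewrite HD. rewrite (qp_add a1 a2), (qopp a1).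
  assert (K : (qp (- lam1 + h1 + h2 + 1)%R * (qp (- lam1 - a1 - INR N)%R - 1) * t1 * t2) = Km - K1).
  { replace (Km - K1) with (-(K1 - Km)) by ring. rewrite K1Km. ring. }
  transitivity ((1 - q) * xp (- a1)%R x * (cc1 x AA aa bb * L1 + cc2 x BB aap bbp * L2 - DD x rr AA BB aa bb aap bbp * L0)).
  { unfold cc1, cc2, AA, BB, aa, bb, aap, bbp. field. repeat split; auto with nzdb. }
  replace (cc1 x AA aa bb * L1 + cc2 x BB aap bbp * L2 - DD x rr AA BB aa bb aap bbp * L0)
    with (E0 * L0 + (K1 - Km)) by (rewrite <- Key; ring).
  rewrite K1Km. ring.
Qed.

Hypotheses (Hg0 : generic_at q qp t1 t2 h1 h2 l1 l2 a1 lam1 x)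
  (Hg1 : generic_at q qp t1 t2 h1 h2 l1 l2 a1 lam1 (q * x))
  (Hg2 : generic_at q qp t1 t2 h1 h2 l1 l2 a1 lam1 (x / q)).

Lemma gen_get y a : generic_at q qp t1 t2 h1 h2 l1 l2 a1 lam1 y ->
  List.In a (par6 qp t1 t2 h1 h2 l1 l2 a1 lam1 y ++ par7 qp t1 t2 h1 h2 l1 l2 a1 lam1 y ++ par8 qp t1 t2 h1 h2 l1 l2 a1 lam1 y) ->
  qgen q a.
Proof. intros [_ H]. apply H. Qed.

Ltac inlist := simpl; repeat (first [left; reflexivity | right]).

Lemma gen_nz y : generic_at q qp t1 t2 h1 h2 l1 l2 a1 lam1 y -> y <> 0.
Proof. intros [H _]. exact H. Qed.

Lemma xq_nz : x / q <> 0.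
Proof. unfold Cdiv. apply Cmult_neq_0; auto with nzdb. apply Cinv_nz; auto with nzdb. Qed.
Lemma qx_nz : q * x <> 0.
Proof. apply Cmult_neq_0; auto with nzdb. Qed.
#[local] Hint Resolve xq_nz qx_nz : nzdb.

Definition cN := cn qp t1 t2 N h1 h2 l1 l2 a1 a2 lam1 E0.

Lemma Pw_PP s : Pw cN N s = s * PP s.
Proof.
  unfold Pw, PP, pp, cN, cn. rewrite <- sumC_scal. apply sumC_ext. intros k _.
  rewrite cseq_cs. simpl Cpow. ring.
Qed.

Lemma Xf_div (y s : C) : y <> 0 -> Xf (y / q) s = Xf y (q * s).
Proof. intros Hy. unfold Xf. f_equal; f_equal; field; repeat split; auto with nzdb. Qed.

Lemma Xf_mul (y s : C) : y <> 0 -> Xf (q * y) s = Xf y (s / q).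
Proof. intros Hy. unfold Xf. f_equal; f_equal; field; repeat split; auto with nzdb. Qed.

Lemma qginf a n : qgen q a -> qinf (a * Cpow q n) <> 0.
Proof. intros H. apply qinf_geo_nz; auto. Qed.

Lemma Wsum_Wseq (w A1 A2 A3 B1 B2 y : C) :
  (forall n, qpoch_inf q (q * Cpow q n) * qpoch_inf q (B1 * Cpow q n) = qinf (w * Cpow q n / aap) * qinf (w * Cpow q n / bbp)) ->
  (forall n, qpoch_inf q (A1 * Cpow q n) * qpoch_inf q (A2 * Cpow q n) = qinf (rr * (w * Cpow q n) / aa) * qinf (rr * (w * Cpow q n) / bb)) ->
  (forall n, B2 * Cpow q n = rr * (w * Cpow q n) / y) ->
  (forall n, A3 * Cpow q n = w * Cpow q n / y) ->
  (forall n, qinf (A1 * Cpow q n) <> 0) -> (forall n, qinf (A2 * Cpow q n) <> 0) -> (forall n, qinf (A3 * Cpow q n) <> 0) ->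
  forall m, Wsum q A1 A2 A3 B1 B2 cN N w m = Wseq w (fun s => Xf y s) m.
Proof.
  intros HN HD HB2 HA3 N1 N2 N3 m. unfold Wsum, Wseq. apply sumC_ext. intros n _.
  rewrite Pw_PP. unfold Rt. rewrite HB2, HA3 in *.
  specialize (N3 n). rewrite HA3 in N3. pose proof (N1 n). pose proof (N2 n).
  unfold Tf, Xf.
  replace (qpoch_inf q (q * Cpow q n) * qpoch_inf q (B1 * Cpow q n) * qpoch_inf q (rr * (w * Cpow q n) / y))
    with (qinf (w * Cpow q n / aap) * qinf (w * Cpow q n / bbp) * qpoch_inf q (rr * (w * Cpow q n) / y)) by (rewrite <- HN; ring).
  replace (qpoch_inf q (A1 * Cpow q n) * qpoch_inf q (A2 * Cpow q n) * qpoch_inf q (w * Cpow q n / y))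
    with (qinf (rr * (w * Cpow q n) / aa) * qinf (rr * (w * Cpow q n) / bb) * qpoch_inf q (w * Cpow q n / y)) by (rewrite <- HD; ring).
  assert (qinf (rr * (w * Cpow q n) / aa) * qinf (rr * (w * Cpow q n) / bb) <> 0).
  { rewrite <- HD. apply Cmult_neq_0; auto. }
  field. repeat split; auto. intro E; apply H1; rewrite E; ring. intro E; apply H1; rewrite E; ring.
Qed.

Ltac qf := qs; field; repeat split; auto with nzdb.

Lemma case6 : A4 q qp t1 t2 h1 h2 l1 l2 a1 a2 (INR N + 1) (g6 q qp xp t1 t2 N h1 h2 l1 l2 a1 a2 lam1 E0) x =
  E0 * g6 q qp xp t1 t2 N h1 h2 l1 l2 a1 a2 lam1 E0 x
  - (1 - q) * xp (- a1)%R x * qp (- lam1 + h1 + h2 + 1)%R * (qp (- lam1 - a1 - INR N)%R - 1) * t1 * t2.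
Proof.
  set (w := qp (l1 + /2)%R * t1).
  set (A1 := qp (lam1 - h1 + l1 + a1)%R). set (A2 := qp (lam1 - h2 + l1 + a1)%R * t1 / t2).
  set (B1 := qp (l1 - l2 + 1)%R * t1 / t2).
  set (A3 := fun y => qp (l1 + /2)%R * t1 / y). set (B2 := fun y => qp (lam1 + l1 + a1 + /2)%R * t1 / y).
  assert (R : forall y, generic_at q qp t1 t2 h1 h2 l1 l2 a1 lam1 y ->
     cv (Wsum q A1 A2 (A3 y) B1 (B2 y) cN N w) (limC (Wsum q A1 A2 (A3 y) B1 (B2 y) cN N w)) /\
     g6 q qp xp t1 t2 N h1 h2 l1 l2 a1 a2 lam1 E0 y = (1 - q) * xp (- a1)%R y * limC (Wsum q A1 A2 (A3 y) B1 (B2 y) cN N w)).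
  { intros y Hg. apply gshape_rep; auto; apply (gen_get y); auto; inlist. }
  assert (W : forall y, generic_at q qp t1 t2 h1 h2 l1 l2 a1 lam1 y -> forall m,
     Wsum q A1 A2 (A3 y) B1 (B2 y) cN N w m = Wseq w (fun s => Xf y s) m).
  { intros y Hg. pose proof (gen_nz y Hg) as Hy. apply Wsum_Wseq.
    - intros n. f_equal; f_equal; unfold w, aap, bbp, B1; qf.
    - intros n. f_equal; f_equal; unfold w, aa, bb, A1, A2, rr; qf.
    - intros n. unfold B2, w, rr. qf.
    - intros n. unfold A3, w. qf.
    - intros n. apply qginf. apply (gen_get y); auto; inlist.
    - intros n. apply qginf. apply (gen_get y); auto; inlist.
    - intros n. apply qginf. apply (gen_get y); auto; inlist. }
  destruct (R x Hg0) as [C0 E0'].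
  destruct (R (x / q) Hg2) as [C1 E1].
  destruct (R (q * x) Hg1) as [C2 E2].
  apply (final_identity _ _ _ _ E0' E1 E2).
  apply (fixed_grid w).
  - intros n. replace (w * Cpow q n / x) with (A3 x * Cpow q n) by (unfold A3, w; field; auto with nzdb).
    apply qginf. apply (gen_get x); auto; inlist.
  - intros n. replace (w * Cpow q n / (q * x)) with (A3 (q * x) * Cpow q n) by (unfold A3, w; field; auto with nzdb).
    apply qginf. apply (gen_get (q * x)); auto; inlist.
  - intros n. replace (rr * (w * Cpow q n) / aa) with (A1 * Cpow q n) by (unfold A1, w, rr, aa; qf).
    apply qginf. apply (gen_get x); auto; inlist.
  - intros n. replace (rr * (w * Cpow q n) / bb) with (A2 * Cpow q n) by (unfold A2, w, rr, bb; qf).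
    apply qginf. apply (gen_get x); auto; inlist.
  - unfold Uf, w, aap. replace (qp (l1 + / 2)%R * t1 / q / (qp (l1 - / 2)%R * t1)) with (RtoC 1) by qf. ring.
  - eapply cv_ext. 2: exact C0. intros m. apply W; auto.
  - eapply cv_ext. 2: exact C1. intros m. rewrite W; auto. unfold Wseq. apply sumC_ext. intros n _. rewrite Xf_div; auto.
  - eapply cv_ext. 2: exact C2. intros m. rewrite W; auto. unfold Wseq. apply sumC_ext. intros n _. rewrite Xf_mul; auto.
Qed.

Lemma case7 : A4 q qp t1 t2 h1 h2 l1 l2 a1 a2 (INR N + 1) (g7 q qp xp t1 t2 N h1 h2 l1 l2 a1 a2 lam1 E0) x =
  E0 * g7 q qp xp t1 t2 N h1 h2 l1 l2 a1 a2 lam1 E0 x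
  - (1 - q) * xp (- a1)%R x * qp (- lam1 + h1 + h2 + 1)%R * (qp (- lam1 - a1 - INR N)%R - 1) * t1 * t2.
Proof.
  set (w := qp (l2 + /2)%R * t2).
  set (A1 := qp (lam1 - h2 + l2 + a1)%R). set (A2 := qp (lam1 - h1 + l2 + a1)%R * t2 / t1).
  set (B1 := qp (- l1 + l2 + 1)%R * t2 / t1).
  set (A3 := fun y => qp (l2 + /2)%R * t2 / y). set (B2 := fun y => qp (lam1 + l2 + a1 + /2)%R * t2 / y).
  assert (R : forall y, generic_at q qp t1 t2 h1 h2 l1 l2 a1 lam1 y ->
     cv (Wsum q A1 A2 (A3 y) B1 (B2 y) cN N w) (limC (Wsum q A1 A2 (A3 y) B1 (B2 y) cN N w)) /\
     g7 q qp xp t1 t2 N h1 h2 l1 l2 a1 a2 lam1 E0 y = (1 - q) * xp (- a1)%R y * limC (Wsum q A1 A2 (A3 y) B1 (B2 y) cN N w)).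
  { intros y Hg. apply gshape_rep; auto; apply (gen_get y); auto; inlist. }
  assert (W : forall y, generic_at q qp t1 t2 h1 h2 l1 l2 a1 lam1 y -> forall m,
     Wsum q A1 A2 (A3 y) B1 (B2 y) cN N w m = Wseq w (fun s => Xf y s) m).
  { intros y Hg. pose proof (gen_nz y Hg) as Hy. apply Wsum_Wseq.
    - intros n. rewrite Cmult_comm. f_equal; f_equal; unfold w, aap, bbp, B1; qf.
    - intros n. rewrite Cmult_comm. f_equal; f_equal; unfold w, aa, bb, A1, A2, rr; qf.
    - intros n. unfold B2, w, rr. qf.
    - intros n. unfold A3, w. qf.
    - intros n. apply qginf. apply (gen_get y); auto; inlist.
    - intros n. apply qginf. apply (gen_get y); auto; inlist.
    - intros n. apply qginf. apply (gen_get y); auto; inlist. }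
  destruct (R x Hg0) as [C0 E0'].
  destruct (R (x / q) Hg2) as [C1 E1].
  destruct (R (q * x) Hg1) as [C2 E2].
  apply (final_identity _ _ _ _ E0' E1 E2).
  apply (fixed_grid w).
  - intros n. replace (w * Cpow q n / x) with (A3 x * Cpow q n) by (unfold A3, w; field; auto with nzdb).
    apply qginf. apply (gen_get x); auto; inlist.
  - intros n. replace (w * Cpow q n / (q * x)) with (A3 (q * x) * Cpow q n) by (unfold A3, w; field; auto with nzdb).
    apply qginf. apply (gen_get (q * x)); auto; inlist.
  - intros n. replace (rr * (w * Cpow q n) / aa) with (A2 * Cpow q n) by (unfold A2, w, rr, aa; qf).
    apply qginf. apply (gen_get x); auto; inlist.
  - intros n. replace (rr * (w * Cpow q n) / bb) with (A1 * Cpow q n) by (unfold A1, w, rr, bb; qf).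
    apply qginf. apply (gen_get x); auto; inlist.
  - unfold Uf, w, bbp. replace (qp (l2 + / 2)%R * t2 / q / (qp (l2 - / 2)%R * t2)) with (RtoC 1) by qf. ring.
  - eapply cv_ext. 2: exact C0. intros m. apply W; auto.
  - eapply cv_ext. 2: exact C1. intros m. rewrite W; auto. unfold Wseq. apply sumC_ext. intros n _. rewrite Xf_div; auto.
  - eapply cv_ext. 2: exact C2. intros m. rewrite W; auto. unfold Wseq. apply sumC_ext. intros n _. rewrite Xf_mul; auto.
Qed.

Lemma Wsum_gen (w A1 A2 A3 B1 B2 y : C) :
  (forall n, qpoch_inf q (q * Cpow q n) * qpoch_inf q (B1 * Cpow q n) * qpoch_inf q (B2 * Cpow q n)
     = qinf (w * Cpow q n / aap) * qinf (w * Cpow q n / bbp) * qinf (rr * (w * Cpow q n) / y)) ->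
  (forall n, qpoch_inf q (A1 * Cpow q n) * qpoch_inf q (A2 * Cpow q n) * qpoch_inf q (A3 * Cpow q n)
     = qinf (rr * (w * Cpow q n) / aa) * qinf (rr * (w * Cpow q n) / bb) * qinf (w * Cpow q n / y)) ->
  (forall n, qpoch_inf q (A1 * Cpow q n) * qpoch_inf q (A2 * Cpow q n) * qpoch_inf q (A3 * Cpow q n) <> 0) ->
  forall m, Wsum q A1 A2 A3 B1 B2 cN N w m = Wseq w (fun s => Xf y s) m.
Proof.
  intros HN HD NZ m. unfold Wsum, Wseq. apply sumC_ext. intros n _.
  rewrite Pw_PP. unfold Rt. rewrite HN, HD. specialize (NZ n). rewrite HD in NZ.
  unfold Tf, Xf.
  assert (qinf (rr * (w * Cpow q n) / aa) <> 0) by (intro E; apply NZ; rewrite E; ring).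
  assert (qinf (rr * (w * Cpow q n) / bb) <> 0) by (intro E; apply NZ; rewrite E; ring).
  assert (qinf (w * Cpow q n / y) <> 0) by (intro E; apply NZ; rewrite E; ring).
  field. repeat split; auto.
Qed.

Lemma case8 : A4 q qp t1 t2 h1 h2 l1 l2 a1 a2 (INR N + 1) (g8 q qp xp t1 t2 N h1 h2 l1 l2 a1 a2 lam1 E0) x =
  E0 * g8 q qp xp t1 t2 N h1 h2 l1 l2 a1 a2 lam1 E0 x
  - (1 - q) * xp (- a1)%R x * qp (- lam1 + h1 + h2 + 1)%R * (qp (- lam1 - a1 - INR N)%R - 1) * t1 * t2.
Proof.
  set (wf := fun y => qp (- lam1 - a1 + 1)%R * y).
  set (A1 := qp (- lam1 - a1 + 1)%R).
  set (A2 := fun y => qp (- h1 + /2)%R * y / t1). set (A3 := fun y => qp (- h2 + /2)%R * y / t2).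
  set (B1 := fun y => qp (- lam1 - l1 - a1 + 3/2)%R * y / t1). set (B2 := fun y => qp (- lam1 - l2 - a1 + 3/2)%R * y / t2).
  assert (R : forall y, generic_at q qp t1 t2 h1 h2 l1 l2 a1 lam1 y ->
     cv (Wsum q A1 (A2 y) (A3 y) (B1 y) (B2 y) cN N (wf y)) (limC (Wsum q A1 (A2 y) (A3 y) (B1 y) (B2 y) cN N (wf y))) /\
     g8 q qp xp t1 t2 N h1 h2 l1 l2 a1 a2 lam1 E0 y = (1 - q) * xp (- a1)%R y * limC (Wsum q A1 (A2 y) (A3 y) (B1 y) (B2 y) cN N (wf y))).
  { intros y Hg. apply gshape_rep; auto; apply (gen_get y); auto; inlist. }
  assert (W : forall y, generic_at q qp t1 t2 h1 h2 l1 l2 a1 lam1 y -> forall m,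
     Wsum q A1 (A2 y) (A3 y) (B1 y) (B2 y) cN N (wf y) m = Wseq (wf y) (fun s => Xf y s) m).
  { intros y Hg. pose proof (gen_nz y Hg) as Hy. apply Wsum_gen.
    - intros n.
      replace (wf y * Cpow q n / aap) with (B1 y * Cpow q n) by (unfold B1, wf, aap; qf).
      replace (wf y * Cpow q n / bbp) with (B2 y * Cpow q n) by (unfold B2, wf, bbp; qf).
      replace (rr * (wf y * Cpow q n) / y) with (q * Cpow q n) by (unfold wf, rr; qf). ring.
    - intros n.
      replace (rr * (wf y * Cpow q n) / aa) with (A2 y * Cpow q n) by (unfold A2, wf, rr, aa; qf).
      replace (rr * (wf y * Cpow q n) / bb) with (A3 y * Cpow q n) by (unfold A3, wf, rr, bb; qf).
      replace (wf y * Cpow q n / y) with (A1 * Cpow q n) by (unfold A1, wf; qf). ring.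
    - intros n. repeat apply Cmult_neq_0; apply qginf; apply (gen_get y); auto; inlist. }
  set (w := wf x).
  destruct (R x Hg0) as [C0 E0'].
  destruct (R (x / q) Hg2) as [C1 E1].
  destruct (R (q * x) Hg1) as [C2 E2].
  apply (final_identity _ _ _ _ E0' E1 E2).
  apply moving_grid; change (qp (- lam1 - a1 + 1)%R * x) with (wf x).
  - intros n. replace (wf x * Cpow q n / x) with (A1 * Cpow q n) by (unfold A1, wf; field; auto with nzdb).
    apply qginf. apply (gen_get x); auto; inlist.
  - intros n. replace (rr * (wf x * Cpow q n) / aa) with (A2 x * Cpow q n) by (unfold A2, wf, rr, aa; qf).
    apply qginf. apply (gen_get x); auto; inlist.
  - intros n. replace (rr * (wf x * Cpow q n) / bb) with (A3 x * Cpow q n) by (unfold A3, wf, rr, bb; qf).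
    apply qginf. apply (gen_get x); auto; inlist.
  - replace (rr * (wf x / q) / aa) with (A2 (x / q) * Cpow q 0) by (unfold A2, wf, rr, aa; simpl Cpow; qf).
    apply qginf. apply (gen_get (x / q)); auto; inlist.
  - replace (rr * (wf x / q) / bb) with (A3 (x / q) * Cpow q 0) by (unfold A3, wf, rr, bb; simpl Cpow; qf).
    apply qginf. apply (gen_get (x / q)); auto; inlist.
  - eapply cv_ext. 2: exact C0. intros m. apply W; auto.
  - eapply cv_ext. 2: exact C1. intros m. rewrite W; auto. unfold Wseq. apply sumC_ext. intros n _.
    rewrite Xf_div; auto.
    replace (wf (x / q) * Cpow q n) with (wf x * Cpow q n / q) by (unfold wf; field; auto with nzdb).
    replace (q * (wf x * Cpow q n / q)) with (wf x * Cpow q n) by (field; auto with nzdb). reflexivity.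
  - eapply cv_ext. 2: exact C2. intros m. rewrite W; auto. unfold Wseq. apply sumC_ext. intros n _.
    rewrite Xf_mul; auto.
    replace (wf (q * x) * Cpow q n) with (q * (wf x * Cpow q n)) by (unfold wf; ring).
    replace (q * (wf x * Cpow q n) / q) with (wf x * Cpow q n) by (field; auto with nzdb). reflexivity.
Qed.

End Main.

Lemma cexp_add (u v : C) : cexp (u + v) = cexp u * cexp v.
Proof.
  unfold cexp. destruct u as [u1 u2], v as [v1 v2]. simpl.
  rewrite exp_plus, cos_plus, sin_plus.
  unfold Cmult; simpl. f_equal; ring.
Qed.

Lemma Cmod_cexp (z : C) : Cmod (cexp z) = exp (Re z).
Proof.
  unfold Cmod. replace (fst (cexp z) ^ 2 + snd (cexp z) ^ 2)%R with ((exp (Re z)) ^ 2)%R.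
  - rewrite sqrt_pow2; auto. left. apply exp_pos.
  - unfold cexp. cbn [fst snd].
    replace ((exp (Re z) * cos (Im z)) ^ 2 + (exp (Re z) * sin (Im z)) ^ 2)%R
      with ((exp (Re z)) ^ 2 * (Rsqr (sin (Im z)) + Rsqr (cos (Im z))))%R by (unfold Rsqr; ring).
    rewrite sin2_cos2. ring.
Qed.

Lemma cexp_nz (z : C) : cexp z <> 0.
Proof. intro E. apply (f_equal Cmod) in E. rewrite Cmod_cexp, Cmod_0 in E. pose proof (exp_pos (Re z)). lra. Qed.

Lemma Re_RtoC_mult (a : R) (z : C) : Re (RtoC a * z) = (a * Re z)%R.
Proof. destruct z. unfold Cmult, RtoC; simpl. ring. Qed.

Lemma Cmult_eq0_l (P I : C) : P <> 0 -> P * I = 0 -> I = 0.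
Proof. intros H H0. transitivity (/ P * (P * I)). field; auto. rewrite H0; ring. Qed.

Lemma A4_lin q qp t1 t2 h1 h2 l1 l2 a1 a2 beta (f h : C -> C) x :
  A4 q qp t1 t2 h1 h2 l1 l2 a1 a2 beta (fun y => f y - h y) x =
  A4 q qp t1 t2 h1 h2 l1 l2 a1 a2 beta f x - A4 q qp t1 t2 h1 h2 l1 l2 a1 a2 beta h x.
Proof. unfold A4. ring. Qed.

Theorem theorem3p7 (q Lq : C) (lg : C -> C) (t1 t2 : C) (N : nat)
  (h1 h2 l1 l2 a1 a2 lam1 : R) (E0 x : C) :
  (0 < Cmod q)%R -> (Cmod q < 1)%R ->
  cexp Lq = q ->
  (forall y : C, y <> 0 -> cexp (lg y) = y) ->
  (forall y : C, y <> 0 -> lg (q * y) = Lq + lg y) ->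
  t1 <> 0 -> t2 <> 0 ->
  lam1 = ((h1 + h2 - l1 - l2 - a1 - a2 - (INR N + 1) + 2) / 2)%R ->
  (forall n : nat, (n < N)%nat -> (- lam1 - a1)%R <> INR n) ->
  (lam1 + a2 > 1)%R ->
  let qp := fun a : R => cexp (RtoC a * Lq) in
  let xp := fun (a : R) (y : C) => cexp (RtoC a * lg y) in
  cE qp t1 t2 N h1 h2 l1 l2 a1 a2 lam1 E0 = 0 ->
  generic_at q qp t1 t2 h1 h2 l1 l2 a1 lam1 x ->
  generic_at q qp t1 t2 h1 h2 l1 l2 a1 lam1 (q * x) ->
  generic_at q qp t1 t2 h1 h2 l1 l2 a1 lam1 (x / q) ->
  let g := gfun q qp xp t1 t2 N h1 h2 l1 l2 a1 a2 lam1 E0 in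
  let A := A4 q qp t1 t2 h1 h2 l1 l2 a1 a2 (INR N + 1) in
  (forall i j : nat, (i = 6 \/ i = 7 \/ i = 8)%nat -> (j = 6 \/ j = 7 \/ j = 8)%nat ->
     A (fun y => g i y - g j y) x = E0 * (g i x - g j x))
  /\
  (forall i : nat, (i = 6 \/ i = 7 \/ i = 8)%nat ->
     A (g i) x = E0 * g i x
       - (1 - q) * xp (- a1)%R x * qp (- lam1 + h1 + h2 + 1)%R
         * (qp (- lam1 - a1 - INR N)%R - 1) * t1 * t2).
Proof.
  intros Hq0 Hq1 HLq Hlg Hlgq Ht1 Ht2 Hlam Hgen Hla2 qp xp HcE Hg0 Hg1 Hg2 g A.
  assert (qp_add : forall u v, qp (u + v)%R = qp u * qp v).
  { intros u v. unfold qp. rewrite RtoC_plus, Cmult_plus_distr_r. apply cexp_add. }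
  assert (qp_one : qp 1%R = q). { unfold qp. rewrite Cmult_1_l. exact HLq. }
  assert (qp_nz : forall u, qp u <> 0) by (intros; apply cexp_nz).
  assert (ReLq : (Re Lq < 0)%R).
  { rewrite <- HLq, Cmod_cexp in Hq1. rewrite <- exp_0 in Hq1. apply exp_lt_inv in Hq1. exact Hq1. }
  assert (qp_ne1 : forall e : R, e <> 0%R -> 1 - qp e <> 0).
  { intros e He E. assert (E' : qp e = 1) by (transitivity (1 - (1 - qp e)); [ring | rewrite E; ring]).
    apply (f_equal Cmod) in E'. unfold qp in E'. rewrite Cmod_cexp, Cmod_1, Re_RtoC_mult in E'.
    rewrite <- exp_0 in E'. apply exp_inv in E'. apply He. nra. }
  assert (Hx0 : x <> 0) by (destruct Hg0; auto).
  assert (Hnz : forall j, (1 <= j <= N)%nat -> xn qp t1 t2 N h1 h2 a1 lam1 j <> 0).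
  { intros j Hj. unfold xn. repeat apply Cmult_neq_0; auto.
    - apply qp_ne1. assert (1 <= INR j)%R by (apply (le_INR 1); lia). lra.
    - apply qp_ne1. intro E. apply (Hgen (N - j)%nat). lia. rewrite minus_INR by lia. lra. }
  assert (HcE' : snd (cs (xn qp t1 t2 N h1 h2 a1 lam1) (yn qp t1 t2 N h1 h2 l1 l2 a1 a2 lam1) (zn qp N a1 a2 lam1) E0 N)
     * (E0 + yn qp t1 t2 N h1 h2 l1 l2 a1 a2 lam1 (S N))
     - fst (cs (xn qp t1 t2 N h1 h2 a1 lam1) (yn qp t1 t2 N h1 h2 l1 l2 a1 a2 lam1) (zn qp N a1 a2 lam1) E0 N)
     * zn qp N a1 a2 lam1 (S N) = 0).
  { unfold cE in HcE. rewrite cseq_cs in HcE. eapply Cmult_eq0_l. 2: exact HcE.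
    apply prodC_nz. intros k Hk. apply Hnz. lia. }
  assert (Hxp : forall y : C, y <> 0 -> xp (- a1)%R (q * y) = qp (- a1)%R * xp (- a1)%R y).
  { intros y Hy. unfold xp, qp. rewrite Hlgq by auto. rewrite Cmult_plus_distr_l. apply cexp_add. }
  pose proof (case6 q qp t1 t2 N h1 h2 l1 l2 a1 a2 lam1 qp_add qp_one qp_nz Ht1 Ht2 Hlam x E0 Hx0 Hq1 Hnz HcE' xp Hxp Hg0 Hg1 Hg2) as H6.
  pose proof (case7 q qp t1 t2 N h1 h2 l1 l2 a1 a2 lam1 qp_add qp_one qp_nz Ht1 Ht2 Hlam x E0 Hx0 Hq1 Hnz HcE' xp Hxp Hg0 Hg1 Hg2) as H7.
  pose proof (case8 q qp t1 t2 N h1 h2 l1 l2 a1 a2 lam1 qp_add qp_one qp_nz Ht1 Ht2 Hlam x E0 Hx0 Hq1 Hnz HcE' xp Hxp Hg0 Hg1 Hg2) as H8.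
  assert (V : forall i : nat, (i = 6 \/ i = 7 \/ i = 8)%nat ->
     A (g i) x = E0 * g i x
       - (1 - q) * xp (- a1)%R x * qp (- lam1 + h1 + h2 + 1)%R
         * (qp (- lam1 - a1 - INR N)%R - 1) * t1 * t2).
  { intros i Hi. destruct Hi as [Hi|[Hi|Hi]]; subst i; [exact H6 | exact H7 | exact H8]. }
  split; [|exact V].
  intros i j Hi Hj. unfold A. rewrite A4_lin. fold A. rewrite (V i Hi), (V j Hj). ring.
Qed.
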